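(* Let $\widetilde M$ be the $\mathbb Z_7\times\mathbb Z_7$ matrix with entries in $\mathbb Z_5$ given by $\widetilde M_{i,j}=0$ if $i+j\equiv0\pmod 7$, $\widetilde M_{i,j}=1$ if $i+j$ is a nonzero square modulo $7$, and $\widetilde M_{i,j}=3$ if $i+j$ is not a square modulo $7$. Let $C_0\subseteq\mathbb Z_5^7$ consist of the $7$ rows of $\widetilde M$, the $7$ rows of $-\widetilde M$ (entrywise negation modulo $5$), and the zero word. Then $|C_0|=15$, $C_0$ has minimum Lee distance at least $9$, $A^L_5(7,9)=15$, and every code $C\subseteq\mathbb Z_5^7$ with $|C|=15$ and minimum Lee distance at least $9$ is Lee equivalent to $C_0$.
   Context: For $u,v\in\mathbb Z_q^n$ (entries viewed as integers in $\{0,\dots,q-1\}$) the Lee distance is $d_L(u,v)=\sum_{i=1}^n\min\{|u_i-v_i|,\,q-|u_i-v_i|\}$. The minimum Lee distance of a code is the minimum of $d_L$ over distinct codewords. $A^L_q(n,d)$ is the maximum cardinality of a code $C\subseteq\mathbb Z_q^n$ with minimum Lee distance at least $d$. Let $D_q$ be the dihedral group of order $2q$, acting on $\mathbb Z_q$ by the maps $x\mapsto \pm x+c$ ($c\in\mathbb Z_q$); the group $D_q^n\rtimes S_n$ acts on $\mathbb Z_q^n$ by acting with an element of $D_q$ in each coordinate separately and permuting coordinates. Two codes $C,D\subseteq\mathbb Z_q^n$ are Lee equivalent if $g\cdot C=D$ for some $g\in D_q^n\rtimes S_n$. *)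

(* Defs.v *)
From mathcomp Require Import all_boot all_order all_algebra all_fingroup.
Set Implicit Arguments. Unset Strict Implicit. Unset Printing Implicit Defensive.
Import GRing.Theory.
Local Open Scope ring_scope.

Definition word (q n : nat) := {ffun 'I_n -> 'Z_q}.

Definition absdiff (a b : nat) : nat := (maxn a b - minn a b)%N.

Definition lee_dist (q n : nat) (u v : word q n) : nat :=
  (\sum_(i < n) minn (absdiff (val (u i)) (val (v i)))
                     (q - absdiff (val (u i)) (val (v i))))%N.

Definition min_lee_ge (q n : nat) (C : {set word q n}) (d : nat) : bool :=
  [forall x in C, forall y in C, (x != y) ==> (d <= lee_dist x y)%N].

Definition ALee (q n d : nat) : nat :=
  (\max_(C : {set word q n} | min_lee_ge C d) #|C|)%N.

Definition dih (q : nat) (s : bool) (c : 'Z_q) (x : 'Z_q) : 'Z_q :=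
  (if s then - x else x) + c.

(* Action of an element ((s_i, c_i)_i, sigma) of D_q^n x| S_n on Z_q^n *)
Definition lee_act (q n : nat) (s : 'I_n -> bool) (c : 'I_n -> 'Z_q)
  (sigma : {perm 'I_n}) (u : word q n) : word q n :=
  [ffun i => dih (s i) (c i) (u (sigma i))].

Definition lee_equiv (q n : nat) (C D : {set word q n}) : Prop :=
  exists (s : 'I_n -> bool) (c : 'I_n -> 'Z_q) (sigma : {perm 'I_n}),
    [set lee_act s c sigma u | u in C] = D.

Definition is_square7 (k : 'Z_7) : bool := [exists y : 'Z_7, y * y == k].

Definition Mt (i j : 'Z_7) : 'Z_5 :=
  let k := i + j in
  if k == 0 then 0 else if is_square7 k then 1 else 3.

Definition Mrow (i : 'Z_7) : word 5 7 := [ffun j : 'I_7 => Mt i (j : 'Z_7)].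
Definition Mrow_neg (i : 'Z_7) : word 5 7 := [ffun j : 'I_7 => - Mt i (j : 'Z_7)].

Definition C0 : {set word 5 7} :=
  [set Mrow i | i : 'Z_7] :|: [set Mrow_neg i | i : 'Z_7] :|: [set [ffun => 0]].

(* Main.v *)
From Stdlib Require Import ZArith Lia.
Require Import Defs.
From mathcomp Require Import all_boot all_order all_algebra all_fingroup.
From HB Require Import structures.
From mathcomp Require Import zify.
Set Implicit Arguments. Unset Strict Implicit. Unset Printing Implicit Defensive.

Inductive z5 := Z0 | Z1 | Z2 | Z3 | Z4.
Definition zn (z : z5) : nat := match z with Z0 => 0 | Z1 => 1 | Z2 => 2 | Z3 => 3 | Z4 => 4 end.
Definition z5_eqb (a b : z5) : bool :=
  match a, b with Z0,Z0|Z1,Z1|Z2,Z2|Z3,Z3|Z4,Z4 => true | _,_ => false end.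
Lemma z5_eqP : Equality.axiom z5_eqb.
Proof. by case; case; constructor. Qed.
HB.instance Definition _ := hasDecEq.Build z5 z5_eqP.

Definition lz (a : z5) : nat := match a with Z0 => 0 | Z1 | Z4 => 1 | _ => 2 end.
Definition subz (a b : z5) : z5 :=
  match a, b with
  | Z0,Z0|Z1,Z1|Z2,Z2|Z3,Z3|Z4,Z4 => Z0
  | Z1,Z0|Z2,Z1|Z3,Z2|Z4,Z3|Z0,Z4 => Z1
  | Z2,Z0|Z3,Z1|Z4,Z2|Z0,Z3|Z1,Z4 => Z2
  | Z3,Z0|Z4,Z1|Z0,Z2|Z1,Z3|Z2,Z4 => Z3
  | _,_ => Z4 end.
Definition negz (a : z5) : z5 := subz Z0 a.
Definition addz (a b : z5) : z5 := subz a (negz b).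
Definition dihz (s : bool) (c x : z5) : z5 := addz (if s then negz x else x) c.
Definition ldz a b := lz (subz a b).
Record w7 := W { c0 : z5; c1 : z5; c2 : z5; c3 : z5; c4 : z5; c5 : z5; c6 : z5 }.
Definition w7_eqb (a b : w7) : bool :=
  [&& c0 a == c0 b, c1 a == c1 b, c2 a == c2 b, c3 a == c3 b, c4 a == c4 b, c5 a == c5 b & c6 a == c6 b].
Lemma w7_eqP : Equality.axiom w7_eqb.
Proof.
case=> a0 a1 a2 a3 a4 a5 a6 [b0 b1 b2 b3 b4 b5 b6]; rewrite /w7_eqb /=.
apply: (iffP idP).
  by case/and5P=> /eqP-> /eqP-> /eqP-> /eqP-> /andP[/eqP-> /andP[/eqP-> /eqP->]].
by case=> -> -> -> -> -> -> ->; rewrite !eqxx.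
Qed.
HB.instance Definition _ := hasDecEq.Build w7 w7_eqP.

Definition coord (i : nat) (w : w7) : z5 :=
  match i with 0 => c0 w | 1 => c1 w | 2 => c2 w | 3 => c3 w | 4 => c4 w | 5 => c5 w | _ => c6 w end.
Definition dist (u v : w7) : nat :=
  ldz (c0 u) (c0 v) + ldz (c1 u) (c1 v) + ldz (c2 u) (c2 v) + ldz (c3 u) (c3 v)
  + ldz (c4 u) (c4 v) + ldz (c5 u) (c5 v) + ldz (c6 u) (c6 v).
Definition zs := [:: Z0; Z1; Z2; Z3; Z4].
Definition allw : seq w7 :=
  flatten (map (fun a => flatten (map (fun b => flatten (map (fun c => flatten (map (fun d =>
  flatten (map (fun e => flatten (map (fun f => map (fun g => W a b c d e f g) zs) zs)) zs)) zs)) zs)) zs)) zs).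
Definition zw := W Z0 Z0 Z0 Z0 Z0 Z0 Z0.
Definition slot (i : nat) (v : z5) (x : w7) := coord i x == v.
Fixpoint cnt5 (i : nat) (l : seq w7) : nat * nat * nat * nat * nat :=
  match l with [::] => (0,0,0,0,0)
  | x :: l' => let: (a,b,c,d,e) := cnt5 i l' in
    match coord i x with Z0 => (a.+1,b,c,d,e) | Z1 => (a,b.+1,c,d,e) | Z2 => (a,b,c.+1,d,e)
    | Z3 => (a,b,c,d.+1,e) | Z4 => (a,b,c,d,e.+1) end end.
Definition get5 (t : nat * nat * nat * nat * nat) (v : z5) : nat :=
  let: (a,b,c,d,e) := t in match v with Z0 => a | Z1 => b | Z2 => c | Z3 => d | Z4 => e end.
Definition pstep (chosen : seq w7) (tc tk : nat * nat * nat * nat * nat) (i : nat)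
   (acc : option ((nat * z5) * nat)) (v : z5) :=
     if get5 tc v < 3 then
       let c := get5 tk v in
       match acc with None => Some ((i, v), c) | Some (_, c') => if c < c' then Some ((i, v), c) else acc end
     else acc.
Definition pick (chosen cands : seq w7) : option ((nat * z5) * nat) :=
  foldl (fun acc i => foldl (pstep chosen (cnt5 i chosen) (cnt5 i cands) i) acc zs) None (iota 0 7).
Definition pick2 chosen cands := omap fst (pick chosen cands).
Definition compat (x y : w7) := dist x y == 9.
Fixpoint br (rec : seq w7 -> seq w7 -> seq (seq w7)) (chosen O S : seq w7) : seq (seq w7) :=
  match S with [::] => [::]
  | x :: S' => rec (x :: chosen) (filter (compat x) (O ++ S')) ++ br rec chosen O S' end.
Fixpoint search (f : nat) (chosen cands : seq w7) : seq (seq w7) :=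
  if size chosen == 15 then [:: chosen] else
  match f with 0 => [::] | f'.+1 =>
    match pick2 chosen cands with None => [::] | Some (i, v) =>
      br (search f') chosen (filter (predC (slot i v)) cands) (filter (slot i v) cands)
    end end.
Definition W9 := filter (fun s => dist s zw == 9) allw.
Definition rep1 := W Z2 Z2 Z2 Z1 Z1 Z1 Z0.
Definition rep2 := W Z2 Z2 Z2 Z2 Z1 Z0 Z0.
Definition run r := search 13 [:: r; zw] (filter (compat r) W9).

Definition cert := (seq bool * seq z5 * seq nat)%type.
Definition actc (g : cert) (i : nat) (w : w7) : z5 :=
  dihz (nth false g.1.1 i) (nth Z0 g.1.2 i) (coord (nth 0 g.2 i) w).
Definition actw (g : cert) (w : w7) : w7 :=
  W (actc g 0 w) (actc g 1 w) (actc g 2 w) (actc g 3 w) (actc g 4 w) (actc g 5 w) (actc g 6 w).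
Definition validc (g : cert) := perm_eq g.2 (iota 0 7).

Definition z5_of (a : 'Z_5) : z5 :=
  match val a with 0 => Z0 | 1 => Z1 | 2 => Z2 | 3 => Z3 | _ => Z4 end.
Definition z_of (z : z5) : 'Z_5 := inZp (zn z).
Definition enc (u : word 5 7) : w7 :=
  W (z5_of (u (inord 0))) (z5_of (u (inord 1))) (z5_of (u (inord 2))) (z5_of (u (inord 3)))
    (z5_of (u (inord 4))) (z5_of (u (inord 5))) (z5_of (u (inord 6))).

Lemma z5K (a : 'Z_5) : z_of (z5_of a) = a.
Proof. by case: a => [[|[|[|[|[|k]]]]] Hk]; apply/val_inj. Qed.
Lemma z5_ofK (z : z5) : z5_of (z_of z) = z.
Proof. by case: z. Qed.

Lemma dihE b (c : z5) (a : 'Z_5) : z5_of (dih b (z_of c) a) = dihz b c (z5_of a).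
Proof. by case: b; case: c; case: a => [[|[|[|[|[|k]]]]] Hk]. Qed.

Lemma ldE (a b : 'Z_5) :
  minn (absdiff (val a) (val b)) (5 - absdiff (val a) (val b)) = ldz (z5_of a) (z5_of b).
Proof. by case: a => [[|[|[|[|[|k]]]]] Hk] //; case: b => [[|[|[|[|[|j]]]]] Hj]. Qed.


Lemma coord_enc (u : word 5 7) k : k < 7 -> coord k (enc u) = z5_of (u (inord k)).
Proof. by case: k => [|[|[|[|[|[|[|k]]]]]]]. Qed.

Lemma w7_ext (a b : w7) : (forall k, k < 7 -> coord k a = coord k b) -> a = b.
Proof.
case: a b => a0 a1 a2 a3 a4 a5 a6 [b0 b1 b2 b3 b4 b5 b6] H.
by move: (H 0 isT) (H 1 isT) (H 2 isT) (H 3 isT) (H 4 isT) (H 5 isT) (H 6 isT) => /= -> -> -> -> -> -> ->.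
Qed.

Lemma enc_inj : injective enc.
Proof.
move=> u v H; apply/ffunP=> i.
rewrite -(inord_val i) -(z5K (u _)) -(z5K (v _)) -!coord_enc ?H //.
Qed.

Lemma lee_distE (u v : word 5 7) : lee_dist u v = dist (enc u) (enc v).
Proof.
rewrite /lee_dist.
have -> : \sum_(i < 7) minn (absdiff (u i) (v i)) (5 - absdiff (u i) (v i)) =
          \sum_(i < 7) (fun k => ldz (z5_of (u (inord k))) (z5_of (v (inord k)))) i.
  by apply: eq_bigr => i _; rewrite ldE inord_val.
rewrite -(big_mkord xpredT (fun k => ldz (z5_of (u (inord k))) (z5_of (v (inord k))))).
rewrite /index_iota /= !big_cons big_nil /dist /= !addnA addn0.
by [].
Qed.

Lemma act_coord (g : cert) w k : k < 7 -> coord k (actw g w) = actc g k w.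
Proof. by case: k => [|[|[|[|[|[|[|k]]]]]]]. Qed.

Lemma cert_sem (g : cert) : validc g ->
  exists s c (sigma : {perm 'I_7}), forall u, enc (lee_act s c sigma u) = actw g (enc u).
Proof.
move=> vg.
have Hu : uniq g.2 by rewrite (perm_uniq vg) iota_uniq.
have Hlt : forall i, i < 7 -> nth 0 g.2 i < 7.
  move=> i hi; have : nth 0 g.2 i \in g.2 by rewrite mem_nth // (perm_size vg) size_iota.
  by rewrite (perm_mem vg) mem_iota.
pose f (i : 'I_7) : 'I_7 := inord (nth 0 g.2 i).
have finj : injective f.
  move=> i j; rewrite /f => /(congr1 val) /=; rewrite !inordK ?Hlt //.
  move/eqP; rewrite nth_uniq ?(perm_size vg) ?size_iota // => /eqP; exact: val_inj.
exists (fun i => nth false g.1.1 i), (fun i => z_of (nth Z0 g.1.2 i)), (perm finj) => u.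
apply: w7_ext => k hk; rewrite coord_enc // act_coord // /actc coord_enc ?Hlt //.
rewrite /lee_act ffunE permE /f dihE; congr (dihz _ _ (z5_of (u _))); rewrite ?inordK //.
Qed.

Module CGr.
Import GRing.Theory.

Lemma dih_comp (s s' : bool) (c c' x : 'Z_5) :
  dih s c (dih s' c' x) = dih (s (+) s') (dih s c c') x.
Proof.
by case: s; case: s'; rewrite /dih /= ?opprD ?opprK ?addrA // addrAC.
Qed.

Lemma act_comp s c (sg : {perm 'I_7}) s' c' (sg' : {perm 'I_7}) (u : word 5 7) :
  lee_act s c sg (lee_act s' c' sg' u) =
  lee_act (fun i => s i (+) s' (sg i)) (fun i => dih (s i) (c i) (c' (sg i))) (sg * sg')%g u.
Proof. by apply/ffunP=> i; rewrite !ffunE permM dih_comp. Qed.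

Lemma ldz_dih s c a b : ldz (dihz s c a) (dihz s c b) = ldz a b.
Proof. by case: s; case: c; case: a; case: b. Qed.

Lemma lee_act_iso s c (sg : {perm 'I_7}) (u v : word 5 7) :
  lee_dist (lee_act s c sg u) (lee_act s c sg v) = lee_dist u v.
Proof.
rewrite /lee_dist.
under eq_bigr => i _ do rewrite !ffunE ldE -[c i]z5K !dihE ldz_dih.
rewrite -(reindex_inj (@perm_inj _ sg) (P:=xpredT) (F:=fun i => ldz (z5_of (u i)) (z5_of (v i)))).
by apply: eq_bigr => i _; rewrite ldE.
Qed.

Lemma ldz0 a b : ldz a b = 0 -> a = b.
Proof. by case: a; case: b. Qed.

Lemma dist0 a b : dist a b = 0 -> a = b.
Proof.
case: a b => a0 a1 a2 a3 a4 a5 a6 [b0 b1 b2 b3 b4 b5 b6]; rewrite /dist /=.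
move/eqP; rewrite !addn_eq0 => /andP[/andP[/andP[/andP[/andP[/andP[]]]]]].
by do 7 move/eqP/ldz0 ->.
Qed.

Lemma lee_dist0 (u v : word 5 7) : lee_dist u v = 0 -> u = v.
Proof. by rewrite lee_distE => /dist0/enc_inj. Qed.

Lemma lee_act_inj s c sg : injective (@lee_act 5 7 s c sg).
Proof. by move=> u v H; apply: lee_dist0; rewrite -(lee_act_iso s c sg) H /lee_dist big1 // => i _; rewrite /absdiff subnn. Qed.

Definition img s c sg (C : {set word 5 7}) := [set lee_act s c sg u | u in C].

Lemma card_img s c sg C : #|img s c sg C| = #|C|.
Proof. by rewrite card_imset //; exact: lee_act_inj. Qed.

Lemma min_img s c sg C d : min_lee_ge C d -> min_lee_ge (img s c sg C) d.
Proof.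
move=> /forallP H; apply/forallP=> x; apply/implyP=> /imsetP[u uC ->].
apply/forallP=> y; apply/implyP=> /imsetP[v vC ->]; apply/implyP=> neq.
rewrite lee_act_iso.
have /implyP := forallP (implyP (H u) uC) v; move/(_ vC)/implyP; apply.
by apply: contra neq => /eqP->.
Qed.

Lemma img_comp s c sg s' c' sg' C :
  img s c sg (img s' c' sg' C) =
  img (fun i => s i (+) s' (sg i)) (fun i => dih (s i) (c i) (c' (sg i))) (sg * sg')%g C.
Proof.
rewrite /img -imset_comp; apply: eq_imset => u /=; by rewrite act_comp.
Qed.

Lemma equiv_trans s c sg C D : lee_equiv (img s c sg C) D -> lee_equiv C D.
Proof.
case=> s' [c' [sg' <-]]; rewrite -/(img s' c' sg' _) img_comp.
by exists (fun i => s' i (+) s (sg' i)), (fun i => dih (s' i) (c' i) (c (sg' i))), (sg' * sg)%g.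
Qed.

End CGr.
Import CGr.


Definition ldn (a b : 'Z_5) : nat := minn (absdiff (val a) (val b)) (5 - absdiff (val a) (val b)).

Module QZ.
Local Open Scope Z_scope.
Lemma quadZ (n0 n1 n2 n3 n4 : Z) :
  (5 * (2 * (n0*n1 + n1*n2 + n2*n3 + n3*n4 + n4*n0) + 4 * (n0*n2 + n1*n3 + n2*n4 + n3*n0 + n4*n1))
   + ((n0 + n1 - 2*n3)*(n0 + n1 - 2*n3) + (n1 + n2 - 2*n4)*(n1 + n2 - 2*n4) + (n2 + n3 - 2*n0)*(n2 + n3 - 2*n0) + (n3 + n4 - 2*n1)*(n3 + n4 - 2*n1) + (n4 + n0 - 2*n2)*(n4 + n0 - 2*n2))
   = 6 * ((n0+n1+n2+n3+n4)*(n0+n1+n2+n3+n4)))%Z.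
Proof. ring. Qed.
End QZ.
Import QZ.


Lemma Z5cases (a : 'Z_5) :
  a = ord0 \/ a = lift ord0 ord0 \/ a = lift ord0 (lift ord0 ord0) \/
  a = lift ord0 (lift ord0 (lift ord0 ord0)) \/ a = lift ord0 (lift ord0 (lift ord0 (lift ord0 ord0))).
Proof.
case: a => [[|[|[|[|[|k]]]]] Ha];
 [left|right;left|right;right;left|right;right;right;left|right;right;right;right|by []]; by apply/val_inj.
Qed.

Lemma quadN (n0 n1 n2 n3 n4 : nat) :
  5 * (2 * (n0*n1 + n1*n2 + n2*n3 + n3*n4 + n4*n0) + 4 * (n0*n2 + n1*n3 + n2*n4 + n3*n0 + n4*n1))
    <= 6 * ((n0+n1+n2+n3+n4)*(n0+n1+n2+n3+n4)) /\
  (5 * (2 * (n0*n1 + n1*n2 + n2*n3 + n3*n4 + n4*n0) + 4 * (n0*n2 + n1*n3 + n2*n4 + n3*n0 + n4*n1))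
    = 6 * ((n0+n1+n2+n3+n4)*(n0+n1+n2+n3+n4)) ->
   [/\ 5 * n0 = n0+n1+n2+n3+n4, 5 * n1 = n0+n1+n2+n3+n4, 5 * n2 = n0+n1+n2+n3+n4,
       5 * n3 = n0+n1+n2+n3+n4 & 5 * n4 = n0+n1+n2+n3+n4]).
Proof.
have E := quadZ (Z.of_nat n0) (Z.of_nat n1) (Z.of_nat n2) (Z.of_nat n3) (Z.of_nat n4).
set t0 := (Z.mul (Z.sub (Z.add (Z.of_nat n0) (Z.of_nat n1)) (Z.mul 2 (Z.of_nat n3))) (Z.sub (Z.add (Z.of_nat n0) (Z.of_nat n1)) (Z.mul 2 (Z.of_nat n3)))) in E.
set t1 := (Z.mul (Z.sub (Z.add (Z.of_nat n1) (Z.of_nat n2)) (Z.mul 2 (Z.of_nat n4))) (Z.sub (Z.add (Z.of_nat n1) (Z.of_nat n2)) (Z.mul 2 (Z.of_nat n4)))) in E.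
set t2 := (Z.mul (Z.sub (Z.add (Z.of_nat n2) (Z.of_nat n3)) (Z.mul 2 (Z.of_nat n0))) (Z.sub (Z.add (Z.of_nat n2) (Z.of_nat n3)) (Z.mul 2 (Z.of_nat n0)))) in E.
set t3 := (Z.mul (Z.sub (Z.add (Z.of_nat n3) (Z.of_nat n4)) (Z.mul 2 (Z.of_nat n1))) (Z.sub (Z.add (Z.of_nat n3) (Z.of_nat n4)) (Z.mul 2 (Z.of_nat n1)))) in E.
set t4 := (Z.mul (Z.sub (Z.add (Z.of_nat n4) (Z.of_nat n0)) (Z.mul 2 (Z.of_nat n2))) (Z.sub (Z.add (Z.of_nat n4) (Z.of_nat n0)) (Z.mul 2 (Z.of_nat n2)))) in E.
have h0 : (Z.le BinNums.Z0 t0) by apply: Z.square_nonneg.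
have h1 : (Z.le BinNums.Z0 t1) by apply: Z.square_nonneg.
have h2 : (Z.le BinNums.Z0 t2) by apply: Z.square_nonneg.
have h3 : (Z.le BinNums.Z0 t3) by apply: Z.square_nonneg.
have h4 : (Z.le BinNums.Z0 t4) by apply: Z.square_nonneg.
split.
  clearbody t0 t1 t2 t3 t4; lia.
move=> H.
have : (t0 = BinNums.Z0 /\ t1 = BinNums.Z0 /\ t2 = BinNums.Z0 /\ t3 = BinNums.Z0 /\ t4 = BinNums.Z0).
  clearbody t0 t1 t2 t3 t4; lia.
rewrite /t0 /t1 /t2 /t3 /t4 => -[/Z.eq_mul_0 e0 [/Z.eq_mul_0 e1 [/Z.eq_mul_0 e2 [/Z.eq_mul_0 e3 /Z.eq_mul_0 e4]]]].
have {}e0 : (Z.sub (Z.add (Z.of_nat n0) (Z.of_nat n1)) (Z.mul 2 (Z.of_nat n3)) = BinNums.Z0) by case: e0.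
have {}e1 : (Z.sub (Z.add (Z.of_nat n1) (Z.of_nat n2)) (Z.mul 2 (Z.of_nat n4)) = BinNums.Z0) by case: e1.
have {}e2 : (Z.sub (Z.add (Z.of_nat n2) (Z.of_nat n3)) (Z.mul 2 (Z.of_nat n0)) = BinNums.Z0) by case: e2.
have {}e3 : (Z.sub (Z.add (Z.of_nat n3) (Z.of_nat n4)) (Z.mul 2 (Z.of_nat n1)) = BinNums.Z0) by case: e3.
have {}e4 : (Z.sub (Z.add (Z.of_nat n4) (Z.of_nat n0)) (Z.mul 2 (Z.of_nat n2)) = BinNums.Z0) by case: e4.
split; lia.
Qed.

Lemma quad (F : 'Z_5 -> nat) :
  5 * (\sum_a \sum_b F a * F b * ldn a b) <= 6 * (\sum_a F a) ^ 2 /\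
  (5 * (\sum_a \sum_b F a * F b * ldn a b) = 6 * (\sum_a F a) ^ 2 -> forall a, 5 * F a = \sum_a F a).
Proof.
rewrite !big_ord_recl !big_ord0 /ldn /=; rewrite /bump /absdiff /maxn /minn /= !subnE /=.
have H5 := Z5cases.
set n0 := F ord0. set n1 := F (lift ord0 ord0). set n2 := F (lift ord0 (lift ord0 ord0)).
set n3 := F (lift ord0 (lift ord0 (lift ord0 ord0))).
set n4 := F (lift ord0 (lift ord0 (lift ord0 (lift ord0 ord0)))).
have [Q1 Q2] := quadN n0 n1 n2 n3 n4.
split; first by lia.
move=> E a; have {Q2} [] : _ := Q2 ltac:(lia).
by case: (H5 a) => [->|[->|[->|[->|->]]]]; rewrite -/n0 -/n1 -/n2 -/n3 -/n4; lia.
Qed.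


Definition ncnt (C : {set word 5 7}) (i : 'I_7) (a : 'Z_5) := #|[set x in C | x i == a]|.

Lemma sum_by_value (C : {set word 5 7}) i (G : 'Z_5 -> nat) :
  \sum_(y in C) G (y i) = \sum_b ncnt C i b * G b.
Proof.
rewrite (partition_big (fun y : word 5 7 => y i) xpredT) //=.
apply: eq_bigr => b _.
rewrite (eq_bigr (fun _ => G b)); last by move=> y /andP[_ /eqP->].
rewrite (eq_bigl (fun y => y \in [set x in C | x i == b])); last by move=> y; rewrite inE.
by rewrite sum_nat_const.
Qed.

Lemma sum_ncnt C i : \sum_b ncnt C i b = #|C|.
Proof.
have := sum_by_value C i (fun _ => 1); rewrite sum1_card => ->.
by apply: eq_bigr => b _; rewrite muln1.
Qed.

Lemma S_eq (C : {set word 5 7}) :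
  \sum_(x in C) \sum_(y in C) lee_dist x y =
  \sum_(i < 7) \sum_a \sum_b ncnt C i a * ncnt C i b * ldn a b.
Proof.
rewrite /lee_dist.
under eq_bigr => x _ do rewrite exchange_big.
rewrite exchange_big; apply: eq_bigr => i _.
under eq_bigr => x _ do rewrite (sum_by_value C i (fun b => ldn (x i) b)).
rewrite (sum_by_value C i (fun a => \sum_b ncnt C i b * ldn a b)).
apply: eq_bigr => a _; rewrite big_distrr; apply: eq_bigr => b _.
exact: mulnA.
Qed.

Lemma lowerS (C : {set word 5 7}) x : min_lee_ge C 9 -> x \in C ->
  9 * (#|C| - 1) <= \sum_(y in C) lee_dist x y.
Proof.
move=> /forallP H xC; rewrite (bigD1 x) //=.
rewrite (eq_bigl (fun y => y \in C :\ x)); last by move=> y; rewrite !inE andbC.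
have -> : #|C| - 1 = #|C :\ x| by rewrite (cardsD1 x C) xC add1n subn1.
have -> : 9 * #|C :\ x| = \sum_(y in C :\ x) 9 by rewrite sum_nat_const mulnC.
apply: leq_trans (leq_addl _ _); apply: leq_sum => y.
rewrite !inE => /andP[yx yC].
have /implyP := forallP (implyP (H x) xC) y; move/(_ yC)/implyP; apply.
by rewrite eq_sym.
Qed.

Lemma sum_eq_le (I : finType) (P : pred I) (F G : I -> nat) :
  (forall i, P i -> F i <= G i) -> \sum_(i | P i) G i <= \sum_(i | P i) F i ->
  forall i, P i -> F i = G i.
Proof.
move=> le ge i Pi; apply/eqP; rewrite eqn_leq le //= leqNgt; apply/negP => lt.
move: ge; rewrite leqNgt => /negP; apply.
rewrite (bigD1 i) //= [X in _ < X](bigD1 i) //= -addSn.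
by apply: leq_add lt _; apply: leq_sum => j /andP[Pj _]; apply: le.
Qed.

Lemma upperQ C i : 5 * (\sum_a \sum_b ncnt C i a * ncnt C i b * ldn a b) <= 6 * #|C| ^ 2.
Proof. by rewrite -(sum_ncnt C i); case: (quad (ncnt C i)). Qed.

Lemma key (C : {set word 5 7}) : min_lee_ge C 9 ->
  #|C| * (9 * (#|C| - 1)) <= \sum_(x in C) \sum_(y in C) lee_dist x y /\
  5 * (\sum_(x in C) \sum_(y in C) lee_dist x y) <= 7 * (6 * #|C| ^ 2).
Proof.
move=> H; split.
  have -> : #|C| * (9 * (#|C| - 1)) = \sum_(x in C) 9 * (#|C| - 1) by rewrite sum_nat_const.
  apply: leq_sum => x xC; exact: lowerS.
rewrite S_eq big_distrr /=.
have -> : 7 * (6 * #|C| ^ 2) = \sum_(i < 7) 6 * #|C| ^ 2 by rewrite sum_nat_const card_ord.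
by apply: leq_sum => i _; apply: upperQ.
Qed.

Lemma plotkin (C : {set word 5 7}) : min_lee_ge C 9 -> #|C| <= 15.
Proof.
move=> H; have [L U] := key H.
move: (leq_trans (leq_mul (leqnn 5) L) U).
case: #|C| => [|m] // h.
nia.
Qed.

Lemma tight (C : {set word 5 7}) : #|C| = 15 -> min_lee_ge C 9 ->
  (forall x y, x \in C -> y \in C -> x != y -> lee_dist x y = 9) /\ (forall i a, ncnt C i a = 3).
Proof.
move=> HC H; have [L U] := key H; rewrite HC in L U.
have Seq : \sum_(x in C) \sum_(y in C) lee_dist x y = 1890 by lia.
split.
  have E1 : forall x, x \in C -> 9 * (#|C| - 1) = \sum_(y in C) lee_dist x y.
    apply: sum_eq_le => [x xC|]; first exact: lowerS.
    by rewrite sum_nat_const HC Seq.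
  move=> x y xC yC xy.
  have := E1 x xC; rewrite HC (bigD1 x) //= (bigD1 y) /=; last by rewrite yC eq_sym.
  have -> : lee_dist x x = 0 by rewrite /lee_dist big1 // => i _; rewrite /absdiff subnn.
  rewrite add0n.
  have : 9 * 13 <= \sum_(i | (i \in C) && (i != x) && (i != y)) lee_dist x i.
    rewrite (eq_bigl (fun z => z \in (C :\ x) :\ y)); last by move=> z; rewrite !inE; case: (z \in C); case: (z == x); case: (z == y).
    have -> : 13 = #|(C :\ x) :\ y|.
      by move: (cardsD1 x C) (cardsD1 y (C :\ x)); rewrite xC !inE eq_sym xy yC HC; lia.
    have -> : 9 * #|(C :\ x) :\ y| = \sum_(z in (C :\ x) :\ y) 9 by rewrite sum_nat_const mulnC.
    apply: leq_sum => z; rewrite !inE => /and3P[zy zx zC].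
    have /implyP := forallP (implyP (forallP H x) xC) z; move/(_ zC)/implyP; apply.
    by rewrite eq_sym.
  have : 9 <= lee_dist x y.
    have /implyP := forallP (implyP (forallP H x) xC) y; move/(_ yC)/implyP; apply; exact: xy.
  move: (lee_dist x y) => dxy.
  set t := \sum_(i | _) _; lia.
have EQ : forall i : 'I_7, true ->
   5 * (\sum_a \sum_b ncnt C i a * ncnt C i b * ldn a b) = 6 * 15 ^ 2.
  apply: sum_eq_le => [i _|]; first by rewrite -HC; apply: upperQ.
  by rewrite -[X in _ <= X]big_distrr /= -S_eq Seq sum_nat_const card_ord.
move=> i a.
have [_ Q2] := quad (ncnt C i).
rewrite sum_ncnt HC in Q2.
have := Q2 (EQ i isT) a; lia.
Qed.

Definition mtz (n : nat) : z5 := if n == 0 then Z0 else if n \in [:: 1; 2; 4] then Z1 else Z3.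
Definition rowz m := W (mtz ((m + 0) %% 7)) (mtz ((m + 1) %% 7)) (mtz ((m + 2) %% 7)) (mtz ((m + 3) %% 7))
   (mtz ((m + 4) %% 7)) (mtz ((m + 5) %% 7)) (mtz ((m + 6) %% 7)).
Definition rownz m := W (negz (mtz ((m + 0) %% 7))) (negz (mtz ((m + 1) %% 7))) (negz (mtz ((m + 2) %% 7)))
   (negz (mtz ((m + 3) %% 7))) (negz (mtz ((m + 4) %% 7))) (negz (mtz ((m + 5) %% 7))) (negz (mtz ((m + 6) %% 7))).
Definition C0w : seq w7 := map rowz (iota 0 7) ++ map rownz (iota 0 7) ++ [:: zw].
Definition certs1 : seq cert := [:: ([:: true; true; true; true; true; true; true], [:: Z0; Z1; Z1; Z3; Z1; Z3; Z3], [:: 6; 1; 0; 4; 2; 5; 3]);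
 ([:: true; true; true; true; true; true; true], [:: Z0; Z1; Z1; Z3; Z1; Z3; Z3], [:: 6; 1; 0; 5; 2; 4; 3]);
 ([:: false; true; true; true; true; true; true], [:: Z0; Z1; Z1; Z3; Z1; Z3; Z3], [:: 6; 1; 0; 4; 2; 5; 3]);
 ([:: false; true; true; true; true; true; true], [:: Z0; Z1; Z1; Z3; Z1; Z3; Z3], [:: 6; 1; 0; 5; 2; 4; 3]);
 ([:: true; true; true; true; true; true; true], [:: Z0; Z1; Z1; Z3; Z1; Z3; Z3], [:: 6; 1; 0; 3; 2; 5; 4]);
 ([:: true; true; true; true; true; true; true], [:: Z0; Z1; Z1; Z3; Z1; Z3; Z3], [:: 6; 1; 0; 5; 2; 3; 4]);
 ([:: false; true; true; true; true; true; true], [:: Z0; Z1; Z1; Z3; Z1; Z3; Z3], [:: 6; 1; 0; 3; 2; 5; 4]);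
 ([:: false; true; true; true; true; true; true], [:: Z0; Z1; Z1; Z3; Z1; Z3; Z3], [:: 6; 1; 0; 5; 2; 3; 4]);
 ([:: true; true; true; true; true; true; true], [:: Z0; Z1; Z1; Z3; Z1; Z3; Z3], [:: 6; 1; 0; 3; 2; 4; 5]);
 ([:: true; true; true; true; true; true; true], [:: Z0; Z1; Z1; Z3; Z1; Z3; Z3], [:: 6; 1; 0; 4; 2; 3; 5]);
 ([:: false; true; true; true; true; true; true], [:: Z0; Z1; Z1; Z3; Z1; Z3; Z3], [:: 6; 1; 0; 3; 2; 4; 5]);
 ([:: false; true; true; true; true; true; true], [:: Z0; Z1; Z1; Z3; Z1; Z3; Z3], [:: 6; 1; 0; 4; 2; 3; 5]);
 ([:: true; true; true; true; true; true; true], [:: Z0; Z1; Z1; Z3; Z1; Z3; Z3], [:: 6; 1; 2; 5; 0; 3; 4]);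
 ([:: true; true; true; true; true; true; true], [:: Z0; Z1; Z1; Z3; Z1; Z3; Z3], [:: 6; 1; 2; 4; 0; 3; 5]);
 ([:: false; true; true; true; true; true; true], [:: Z0; Z1; Z1; Z3; Z1; Z3; Z3], [:: 6; 1; 2; 5; 0; 3; 4]);
 ([:: false; true; true; true; true; true; true], [:: Z0; Z1; Z1; Z3; Z1; Z3; Z3], [:: 6; 1; 2; 4; 0; 3; 5]);
 ([:: true; true; true; true; true; true; true], [:: Z0; Z1; Z1; Z3; Z1; Z3; Z3], [:: 6; 1; 2; 5; 0; 4; 3]);
 ([:: true; true; true; true; true; true; true], [:: Z0; Z1; Z1; Z3; Z1; Z3; Z3], [:: 6; 1; 2; 3; 0; 4; 5]);
 ([:: false; true; true; true; true; true; true], [:: Z0; Z1; Z1; Z3; Z1; Z3; Z3], [:: 6; 1; 2; 5; 0; 4; 3]);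
 ([:: false; true; true; true; true; true; true], [:: Z0; Z1; Z1; Z3; Z1; Z3; Z3], [:: 6; 1; 2; 3; 0; 4; 5]);
 ([:: true; true; true; true; true; true; true], [:: Z0; Z1; Z1; Z3; Z1; Z3; Z3], [:: 6; 1; 2; 4; 0; 5; 3]);
 ([:: true; true; true; true; true; true; true], [:: Z0; Z1; Z1; Z3; Z1; Z3; Z3], [:: 6; 1; 2; 3; 0; 5; 4]);
 ([:: false; true; true; true; true; true; true], [:: Z0; Z1; Z1; Z3; Z1; Z3; Z3], [:: 6; 1; 2; 4; 0; 5; 3]);
 ([:: false; true; true; true; true; true; true], [:: Z0; Z1; Z1; Z3; Z1; Z3; Z3], [:: 6; 1; 2; 3; 0; 5; 4]);
 ([:: false; true; false; true; true; true; false], [:: Z0; Z0; Z0; Z0; Z0; Z0; Z0], [:: 3; 0; 5; 1; 2; 6; 4]);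
 ([:: false; true; false; true; true; true; false], [:: Z0; Z0; Z0; Z0; Z0; Z0; Z0], [:: 4; 0; 5; 1; 2; 6; 3]);
 ([:: false; true; false; true; true; false; false], [:: Z0; Z0; Z0; Z0; Z0; Z0; Z0], [:: 3; 0; 5; 1; 2; 6; 4]);
 ([:: false; true; false; true; true; false; false], [:: Z0; Z0; Z0; Z0; Z0; Z0; Z0], [:: 4; 0; 5; 1; 2; 6; 3]);
 ([:: false; true; false; true; true; true; false], [:: Z0; Z0; Z0; Z0; Z0; Z0; Z0], [:: 3; 0; 4; 1; 2; 6; 5]);
 ([:: false; true; false; true; true; true; false], [:: Z0; Z0; Z0; Z0; Z0; Z0; Z0], [:: 5; 0; 4; 1; 2; 6; 3]);
 ([:: false; true; false; true; true; false; false], [:: Z0; Z0; Z0; Z0; Z0; Z0; Z0], [:: 3; 0; 4; 1; 2; 6; 5]);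
 ([:: false; true; false; true; true; false; false], [:: Z0; Z0; Z0; Z0; Z0; Z0; Z0], [:: 5; 0; 4; 1; 2; 6; 3]);
 ([:: false; true; false; true; true; true; false], [:: Z0; Z0; Z0; Z0; Z0; Z0; Z0], [:: 4; 0; 3; 1; 2; 6; 5]);
 ([:: false; true; false; true; true; true; false], [:: Z0; Z0; Z0; Z0; Z0; Z0; Z0], [:: 5; 0; 3; 1; 2; 6; 4]);
 ([:: false; true; false; true; true; false; false], [:: Z0; Z0; Z0; Z0; Z0; Z0; Z0], [:: 4; 0; 3; 1; 2; 6; 5]);
 ([:: false; true; false; true; true; false; false], [:: Z0; Z0; Z0; Z0; Z0; Z0; Z0], [:: 5; 0; 3; 1; 2; 6; 4]);
 ([:: false; true; false; true; true; false; false], [:: Z0; Z0; Z0; Z0; Z0; Z0; Z0], [:: 4; 0; 3; 2; 1; 6; 5]);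
 ([:: false; true; false; true; true; false; false], [:: Z0; Z0; Z0; Z0; Z0; Z0; Z0], [:: 5; 0; 3; 2; 1; 6; 4]);
 ([:: false; true; false; true; true; true; false], [:: Z0; Z0; Z0; Z0; Z0; Z0; Z0], [:: 4; 0; 3; 2; 1; 6; 5]);
 ([:: false; true; false; true; true; true; false], [:: Z0; Z0; Z0; Z0; Z0; Z0; Z0], [:: 5; 0; 3; 2; 1; 6; 4]);
 ([:: false; true; false; true; true; false; false], [:: Z0; Z0; Z0; Z0; Z0; Z0; Z0], [:: 3; 0; 4; 2; 1; 6; 5]);
 ([:: false; true; false; true; true; false; false], [:: Z0; Z0; Z0; Z0; Z0; Z0; Z0], [:: 5; 0; 4; 2; 1; 6; 3]);
 ([:: false; true; false; true; true; true; false], [:: Z0; Z0; Z0; Z0; Z0; Z0; Z0], [:: 3; 0; 4; 2; 1; 6; 5]);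
 ([:: false; true; false; true; true; true; false], [:: Z0; Z0; Z0; Z0; Z0; Z0; Z0], [:: 5; 0; 4; 2; 1; 6; 3]);
 ([:: false; true; false; true; true; false; false], [:: Z0; Z0; Z0; Z0; Z0; Z0; Z0], [:: 3; 0; 5; 2; 1; 6; 4]);
 ([:: false; true; false; true; true; false; false], [:: Z0; Z0; Z0; Z0; Z0; Z0; Z0], [:: 4; 0; 5; 2; 1; 6; 3]);
 ([:: false; true; false; true; true; true; false], [:: Z0; Z0; Z0; Z0; Z0; Z0; Z0], [:: 3; 0; 5; 2; 1; 6; 4]);
 ([:: false; true; false; true; true; true; false], [:: Z0; Z0; Z0; Z0; Z0; Z0; Z0], [:: 4; 0; 5; 2; 1; 6; 3]);
 ([:: false; true; true; false; true; false; false], [:: Z0; Z1; Z1; Z3; Z1; Z3; Z3], [:: 6; 4; 3; 0; 5; 1; 2]);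
 ([:: false; true; true; false; true; false; false], [:: Z0; Z1; Z1; Z3; Z1; Z3; Z3], [:: 6; 5; 3; 0; 4; 1; 2]);
 ([:: true; true; true; false; true; false; false], [:: Z0; Z1; Z1; Z3; Z1; Z3; Z3], [:: 6; 4; 3; 0; 5; 1; 2]);
 ([:: true; true; true; false; true; false; false], [:: Z0; Z1; Z1; Z3; Z1; Z3; Z3], [:: 6; 5; 3; 0; 4; 1; 2]);
 ([:: false; true; true; false; true; false; false], [:: Z0; Z1; Z1; Z3; Z1; Z3; Z3], [:: 6; 3; 4; 0; 5; 1; 2]);
 ([:: false; true; true; false; true; false; false], [:: Z0; Z1; Z1; Z3; Z1; Z3; Z3], [:: 6; 5; 4; 0; 3; 1; 2]);
 ([:: true; true; true; false; true; false; false], [:: Z0; Z1; Z1; Z3; Z1; Z3; Z3], [:: 6; 3; 4; 0; 5; 1; 2]);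
 ([:: true; true; true; false; true; false; false], [:: Z0; Z1; Z1; Z3; Z1; Z3; Z3], [:: 6; 5; 4; 0; 3; 1; 2]);
 ([:: false; true; true; false; true; false; false], [:: Z0; Z1; Z1; Z3; Z1; Z3; Z3], [:: 6; 3; 5; 0; 4; 1; 2]);
 ([:: false; true; true; false; true; false; false], [:: Z0; Z1; Z1; Z3; Z1; Z3; Z3], [:: 6; 4; 5; 0; 3; 1; 2]);
 ([:: true; true; true; false; true; false; false], [:: Z0; Z1; Z1; Z3; Z1; Z3; Z3], [:: 6; 3; 5; 0; 4; 1; 2]);
 ([:: true; true; true; false; true; false; false], [:: Z0; Z1; Z1; Z3; Z1; Z3; Z3], [:: 6; 4; 5; 0; 3; 1; 2]);
 ([:: false; true; true; false; true; false; false], [:: Z0; Z1; Z1; Z3; Z1; Z3; Z3], [:: 6; 3; 5; 1; 4; 0; 2]);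
 ([:: false; true; true; false; true; false; false], [:: Z0; Z1; Z1; Z3; Z1; Z3; Z3], [:: 6; 3; 4; 1; 5; 0; 2]);
 ([:: true; true; true; false; true; false; false], [:: Z0; Z1; Z1; Z3; Z1; Z3; Z3], [:: 6; 3; 5; 1; 4; 0; 2]);
 ([:: true; true; true; false; true; false; false], [:: Z0; Z1; Z1; Z3; Z1; Z3; Z3], [:: 6; 3; 4; 1; 5; 0; 2]);
 ([:: false; true; true; false; true; false; false], [:: Z0; Z1; Z1; Z3; Z1; Z3; Z3], [:: 6; 4; 5; 1; 3; 0; 2]);
 ([:: false; true; true; false; true; false; false], [:: Z0; Z1; Z1; Z3; Z1; Z3; Z3], [:: 6; 4; 3; 1; 5; 0; 2]);
 ([:: true; true; true; false; true; false; false], [:: Z0; Z1; Z1; Z3; Z1; Z3; Z3], [:: 6; 4; 5; 1; 3; 0; 2]);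
 ([:: true; true; true; false; true; false; false], [:: Z0; Z1; Z1; Z3; Z1; Z3; Z3], [:: 6; 4; 3; 1; 5; 0; 2]);
 ([:: false; true; true; false; true; false; false], [:: Z0; Z1; Z1; Z3; Z1; Z3; Z3], [:: 6; 5; 4; 1; 3; 0; 2]);
 ([:: false; true; true; false; true; false; false], [:: Z0; Z1; Z1; Z3; Z1; Z3; Z3], [:: 6; 5; 3; 1; 4; 0; 2]);
 ([:: true; true; true; false; true; false; false], [:: Z0; Z1; Z1; Z3; Z1; Z3; Z3], [:: 6; 5; 4; 1; 3; 0; 2]);
 ([:: true; true; true; false; true; false; false], [:: Z0; Z1; Z1; Z3; Z1; Z3; Z3], [:: 6; 5; 3; 1; 4; 0; 2])].
Definition certs2 : seq cert := [:: ([:: true; false; false; true; true; true; true], [:: Z0; Z1; Z1; Z3; Z1; Z3; Z3], [:: 3; 6; 0; 5; 4; 2; 1]);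
 ([:: true; false; false; false; true; true; true], [:: Z0; Z1; Z1; Z3; Z1; Z3; Z3], [:: 3; 6; 0; 5; 4; 2; 1]);
 ([:: false; false; false; false; false; true; true], [:: Z0; Z1; Z1; Z3; Z1; Z3; Z3], [:: 4; 1; 3; 2; 5; 0; 6]);
 ([:: false; false; false; false; true; true; true], [:: Z0; Z1; Z1; Z3; Z1; Z3; Z3], [:: 4; 1; 3; 2; 5; 0; 6]);
 ([:: false; false; false; false; false; true; true], [:: Z0; Z1; Z1; Z3; Z1; Z3; Z3], [:: 4; 3; 0; 2; 6; 1; 5]);
 ([:: false; false; false; false; false; true; false], [:: Z0; Z1; Z1; Z3; Z1; Z3; Z3], [:: 4; 3; 0; 2; 6; 1; 5]);
 ([:: true; false; false; true; true; true; true], [:: Z0; Z1; Z1; Z3; Z1; Z3; Z3], [:: 3; 5; 1; 6; 4; 0; 2]);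
 ([:: true; true; false; true; true; true; true], [:: Z0; Z1; Z1; Z3; Z1; Z3; Z3], [:: 3; 5; 1; 6; 4; 0; 2]);
 ([:: true; true; false; true; true; true; true], [:: Z0; Z1; Z1; Z3; Z1; Z3; Z3], [:: 3; 6; 0; 5; 4; 2; 1]);
 ([:: true; true; false; false; true; true; true], [:: Z0; Z1; Z1; Z3; Z1; Z3; Z3], [:: 3; 6; 0; 5; 4; 2; 1]);
 ([:: false; false; false; false; false; true; false], [:: Z0; Z1; Z1; Z3; Z1; Z3; Z3], [:: 4; 1; 3; 2; 5; 0; 6]);
 ([:: false; false; false; false; true; true; false], [:: Z0; Z1; Z1; Z3; Z1; Z3; Z3], [:: 4; 1; 3; 2; 5; 0; 6]);
 ([:: false; false; false; false; true; true; true], [:: Z0; Z1; Z1; Z3; Z1; Z3; Z3], [:: 4; 3; 0; 2; 6; 1; 5]);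
 ([:: false; false; false; false; true; true; false], [:: Z0; Z1; Z1; Z3; Z1; Z3; Z3], [:: 4; 3; 0; 2; 6; 1; 5]);
 ([:: true; false; false; false; true; true; true], [:: Z0; Z1; Z1; Z3; Z1; Z3; Z3], [:: 3; 5; 1; 6; 4; 0; 2]);
 ([:: true; true; false; false; true; true; true], [:: Z0; Z1; Z1; Z3; Z1; Z3; Z3], [:: 3; 5; 1; 6; 4; 0; 2]);
 ([:: true; false; false; true; true; true; true], [:: Z0; Z1; Z1; Z3; Z1; Z3; Z3], [:: 2; 6; 0; 5; 4; 3; 1]);
 ([:: true; false; false; false; true; true; true], [:: Z0; Z1; Z1; Z3; Z1; Z3; Z3], [:: 2; 6; 0; 5; 4; 3; 1]);
 ([:: false; false; false; false; false; true; true], [:: Z0; Z1; Z1; Z3; Z1; Z3; Z3], [:: 4; 1; 2; 3; 5; 0; 6]);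
 ([:: false; false; false; false; true; true; true], [:: Z0; Z1; Z1; Z3; Z1; Z3; Z3], [:: 4; 1; 2; 3; 5; 0; 6]);
 ([:: false; false; false; false; false; true; true], [:: Z0; Z1; Z1; Z3; Z1; Z3; Z3], [:: 4; 2; 0; 3; 6; 1; 5]);
 ([:: false; false; false; false; false; true; false], [:: Z0; Z1; Z1; Z3; Z1; Z3; Z3], [:: 4; 2; 0; 3; 6; 1; 5]);
 ([:: true; false; false; true; true; true; true], [:: Z0; Z1; Z1; Z3; Z1; Z3; Z3], [:: 2; 5; 1; 6; 4; 0; 3]);
 ([:: true; true; false; true; true; true; true], [:: Z0; Z1; Z1; Z3; Z1; Z3; Z3], [:: 2; 5; 1; 6; 4; 0; 3]);
 ([:: true; true; false; true; true; true; true], [:: Z0; Z1; Z1; Z3; Z1; Z3; Z3], [:: 2; 6; 0; 5; 4; 3; 1]);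
 ([:: true; true; false; false; true; true; true], [:: Z0; Z1; Z1; Z3; Z1; Z3; Z3], [:: 2; 6; 0; 5; 4; 3; 1]);
 ([:: false; false; false; false; false; true; false], [:: Z0; Z1; Z1; Z3; Z1; Z3; Z3], [:: 4; 1; 2; 3; 5; 0; 6]);
 ([:: false; false; false; false; true; true; false], [:: Z0; Z1; Z1; Z3; Z1; Z3; Z3], [:: 4; 1; 2; 3; 5; 0; 6]);
 ([:: false; false; false; false; true; true; true], [:: Z0; Z1; Z1; Z3; Z1; Z3; Z3], [:: 4; 2; 0; 3; 6; 1; 5]);
 ([:: false; false; false; false; true; true; false], [:: Z0; Z1; Z1; Z3; Z1; Z3; Z3], [:: 4; 2; 0; 3; 6; 1; 5]);
 ([:: true; false; false; false; true; true; true], [:: Z0; Z1; Z1; Z3; Z1; Z3; Z3], [:: 2; 5; 1; 6; 4; 0; 3]);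
 ([:: true; true; false; false; true; true; true], [:: Z0; Z1; Z1; Z3; Z1; Z3; Z3], [:: 2; 5; 1; 6; 4; 0; 3]);
 ([:: false; false; false; false; false; true; true], [:: Z0; Z1; Z1; Z3; Z1; Z3; Z3], [:: 4; 3; 0; 1; 6; 2; 5]);
 ([:: false; false; false; false; false; true; false], [:: Z0; Z1; Z1; Z3; Z1; Z3; Z3], [:: 4; 3; 0; 1; 6; 2; 5]);
 ([:: true; false; false; true; true; true; true], [:: Z0; Z1; Z1; Z3; Z1; Z3; Z3], [:: 3; 6; 0; 5; 4; 1; 2]);
 ([:: true; false; false; false; true; true; true], [:: Z0; Z1; Z1; Z3; Z1; Z3; Z3], [:: 3; 6; 0; 5; 4; 1; 2]);
 ([:: true; false; true; true; false; true; true], [:: Z0; Z1; Z1; Z3; Z1; Z3; Z3], [:: 3; 2; 4; 1; 5; 6; 0]);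
 ([:: true; false; true; true; true; true; true], [:: Z0; Z1; Z1; Z3; Z1; Z3; Z3], [:: 3; 2; 4; 1; 5; 6; 0]);
 ([:: false; false; false; false; false; true; true], [:: Z0; Z1; Z1; Z3; Z1; Z3; Z3], [:: 4; 2; 3; 1; 5; 0; 6]);
 ([:: false; false; false; false; true; true; true], [:: Z0; Z1; Z1; Z3; Z1; Z3; Z3], [:: 4; 2; 3; 1; 5; 0; 6]);
 ([:: false; false; false; false; true; true; true], [:: Z0; Z1; Z1; Z3; Z1; Z3; Z3], [:: 4; 3; 0; 1; 6; 2; 5]);
 ([:: false; false; false; false; true; true; false], [:: Z0; Z1; Z1; Z3; Z1; Z3; Z3], [:: 4; 3; 0; 1; 6; 2; 5]);
 ([:: true; true; false; true; true; true; true], [:: Z0; Z1; Z1; Z3; Z1; Z3; Z3], [:: 3; 6; 0; 5; 4; 1; 2]);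
 ([:: true; true; false; false; true; true; true], [:: Z0; Z1; Z1; Z3; Z1; Z3; Z3], [:: 3; 6; 0; 5; 4; 1; 2]);
 ([:: true; false; true; true; false; false; true], [:: Z0; Z1; Z1; Z3; Z1; Z3; Z3], [:: 3; 2; 4; 1; 5; 6; 0]);
 ([:: true; false; true; true; true; false; true], [:: Z0; Z1; Z1; Z3; Z1; Z3; Z3], [:: 3; 2; 4; 1; 5; 6; 0]);
 ([:: false; false; false; false; false; true; false], [:: Z0; Z1; Z1; Z3; Z1; Z3; Z3], [:: 4; 2; 3; 1; 5; 0; 6]);
 ([:: false; false; false; false; true; true; false], [:: Z0; Z1; Z1; Z3; Z1; Z3; Z3], [:: 4; 2; 3; 1; 5; 0; 6]);
 ([:: false; false; false; false; false; true; true], [:: Z0; Z1; Z1; Z3; Z1; Z3; Z3], [:: 4; 2; 0; 1; 6; 3; 5]);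
 ([:: false; false; false; false; false; true; false], [:: Z0; Z1; Z1; Z3; Z1; Z3; Z3], [:: 4; 2; 0; 1; 6; 3; 5]);
 ([:: true; false; false; true; true; true; true], [:: Z0; Z1; Z1; Z3; Z1; Z3; Z3], [:: 2; 6; 0; 5; 4; 1; 3]);
 ([:: true; false; false; false; true; true; true], [:: Z0; Z1; Z1; Z3; Z1; Z3; Z3], [:: 2; 6; 0; 5; 4; 1; 3]);
 ([:: true; false; true; true; false; true; true], [:: Z0; Z1; Z1; Z3; Z1; Z3; Z3], [:: 2; 3; 4; 1; 5; 6; 0]);
 ([:: true; false; true; true; true; true; true], [:: Z0; Z1; Z1; Z3; Z1; Z3; Z3], [:: 2; 3; 4; 1; 5; 6; 0]);
 ([:: false; false; false; true; false; false; true], [:: Z0; Z1; Z1; Z3; Z1; Z3; Z3], [:: 4; 2; 5; 6; 3; 1; 0]);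
 ([:: false; false; true; true; false; false; true], [:: Z0; Z1; Z1; Z3; Z1; Z3; Z3], [:: 4; 2; 5; 6; 3; 1; 0]);
 ([:: false; false; false; false; true; true; true], [:: Z0; Z1; Z1; Z3; Z1; Z3; Z3], [:: 4; 2; 0; 1; 6; 3; 5]);
 ([:: false; false; false; false; true; true; false], [:: Z0; Z1; Z1; Z3; Z1; Z3; Z3], [:: 4; 2; 0; 1; 6; 3; 5]);
 ([:: true; true; false; true; true; true; true], [:: Z0; Z1; Z1; Z3; Z1; Z3; Z3], [:: 2; 6; 0; 5; 4; 1; 3]);
 ([:: true; true; false; false; true; true; true], [:: Z0; Z1; Z1; Z3; Z1; Z3; Z3], [:: 2; 6; 0; 5; 4; 1; 3]);
 ([:: true; false; true; true; false; false; true], [:: Z0; Z1; Z1; Z3; Z1; Z3; Z3], [:: 2; 3; 4; 1; 5; 6; 0]);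
 ([:: true; false; true; true; true; false; true], [:: Z0; Z1; Z1; Z3; Z1; Z3; Z3], [:: 2; 3; 4; 1; 5; 6; 0]);
 ([:: false; false; false; false; false; false; true], [:: Z0; Z1; Z1; Z3; Z1; Z3; Z3], [:: 4; 2; 5; 6; 3; 1; 0]);
 ([:: false; false; true; false; false; false; true], [:: Z0; Z1; Z1; Z3; Z1; Z3; Z3], [:: 4; 2; 5; 6; 3; 1; 0]);
 ([:: true; false; false; true; true; true; true], [:: Z0; Z1; Z1; Z3; Z1; Z3; Z3], [:: 1; 6; 0; 5; 4; 3; 2]);
 ([:: true; false; false; false; true; true; true], [:: Z0; Z1; Z1; Z3; Z1; Z3; Z3], [:: 1; 6; 0; 5; 4; 3; 2]);
 ([:: false; false; false; true; false; false; true], [:: Z0; Z1; Z1; Z3; Z1; Z3; Z3], [:: 4; 1; 5; 6; 2; 3; 0]);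
 ([:: false; false; true; true; false; false; true], [:: Z0; Z1; Z1; Z3; Z1; Z3; Z3], [:: 4; 1; 5; 6; 2; 3; 0]);
 ([:: false; false; false; false; false; true; true], [:: Z0; Z1; Z1; Z3; Z1; Z3; Z3], [:: 4; 1; 0; 3; 6; 2; 5]);
 ([:: false; false; false; false; false; true; false], [:: Z0; Z1; Z1; Z3; Z1; Z3; Z3], [:: 4; 1; 0; 3; 6; 2; 5]);
 ([:: true; false; false; true; true; true; true], [:: Z0; Z1; Z1; Z3; Z1; Z3; Z3], [:: 1; 5; 2; 6; 4; 0; 3]);
 ([:: true; true; false; true; true; true; true], [:: Z0; Z1; Z1; Z3; Z1; Z3; Z3], [:: 1; 5; 2; 6; 4; 0; 3]);
 ([:: true; true; false; true; true; true; true], [:: Z0; Z1; Z1; Z3; Z1; Z3; Z3], [:: 1; 6; 0; 5; 4; 3; 2]);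
 ([:: true; true; false; false; true; true; true], [:: Z0; Z1; Z1; Z3; Z1; Z3; Z3], [:: 1; 6; 0; 5; 4; 3; 2]);
 ([:: false; false; false; false; false; false; true], [:: Z0; Z1; Z1; Z3; Z1; Z3; Z3], [:: 4; 1; 5; 6; 2; 3; 0]);
 ([:: false; false; true; false; false; false; true], [:: Z0; Z1; Z1; Z3; Z1; Z3; Z3], [:: 4; 1; 5; 6; 2; 3; 0]);
 ([:: false; false; false; false; true; true; true], [:: Z0; Z1; Z1; Z3; Z1; Z3; Z3], [:: 4; 1; 0; 3; 6; 2; 5]);
 ([:: false; false; false; false; true; true; false], [:: Z0; Z1; Z1; Z3; Z1; Z3; Z3], [:: 4; 1; 0; 3; 6; 2; 5]);
 ([:: true; false; false; false; true; true; true], [:: Z0; Z1; Z1; Z3; Z1; Z3; Z3], [:: 1; 5; 2; 6; 4; 0; 3]);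
 ([:: true; true; false; false; true; true; true], [:: Z0; Z1; Z1; Z3; Z1; Z3; Z3], [:: 1; 5; 2; 6; 4; 0; 3]);
 ([:: false; false; false; true; false; false; true], [:: Z0; Z1; Z1; Z3; Z1; Z3; Z3], [:: 4; 0; 6; 5; 1; 2; 3]);
 ([:: false; false; false; false; false; false; true], [:: Z0; Z1; Z1; Z3; Z1; Z3; Z3], [:: 4; 0; 6; 5; 1; 2; 3]);
 ([:: true; false; false; true; true; true; true], [:: Z0; Z1; Z1; Z3; Z1; Z3; Z3], [:: 1; 6; 0; 5; 4; 2; 3]);
 ([:: true; false; false; false; true; true; true], [:: Z0; Z1; Z1; Z3; Z1; Z3; Z3], [:: 1; 6; 0; 5; 4; 2; 3]);
 ([:: true; false; false; true; true; true; true], [:: Z0; Z1; Z1; Z3; Z1; Z3; Z3], [:: 1; 5; 3; 6; 4; 0; 2]);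
 ([:: true; true; false; true; true; true; true], [:: Z0; Z1; Z1; Z3; Z1; Z3; Z3], [:: 1; 5; 3; 6; 4; 0; 2]);
 ([:: false; false; false; true; false; false; true], [:: Z0; Z1; Z1; Z3; Z1; Z3; Z3], [:: 4; 1; 5; 6; 3; 2; 0]);
 ([:: false; false; true; true; false; false; true], [:: Z0; Z1; Z1; Z3; Z1; Z3; Z3], [:: 4; 1; 5; 6; 3; 2; 0]);
 ([:: false; false; true; true; false; false; true], [:: Z0; Z1; Z1; Z3; Z1; Z3; Z3], [:: 4; 0; 6; 5; 1; 2; 3]);
 ([:: false; false; true; false; false; false; true], [:: Z0; Z1; Z1; Z3; Z1; Z3; Z3], [:: 4; 0; 6; 5; 1; 2; 3]);
 ([:: true; true; false; true; true; true; true], [:: Z0; Z1; Z1; Z3; Z1; Z3; Z3], [:: 1; 6; 0; 5; 4; 2; 3]);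
 ([:: true; true; false; false; true; true; true], [:: Z0; Z1; Z1; Z3; Z1; Z3; Z3], [:: 1; 6; 0; 5; 4; 2; 3]);
 ([:: true; false; false; false; true; true; true], [:: Z0; Z1; Z1; Z3; Z1; Z3; Z3], [:: 1; 5; 3; 6; 4; 0; 2]);
 ([:: true; true; false; false; true; true; true], [:: Z0; Z1; Z1; Z3; Z1; Z3; Z3], [:: 1; 5; 3; 6; 4; 0; 2]);
 ([:: false; false; false; false; false; false; true], [:: Z0; Z1; Z1; Z3; Z1; Z3; Z3], [:: 4; 1; 5; 6; 3; 2; 0]);
 ([:: false; false; true; false; false; false; true], [:: Z0; Z1; Z1; Z3; Z1; Z3; Z3], [:: 4; 1; 5; 6; 3; 2; 0]);
 ([:: false; false; false; true; false; false; true], [:: Z0; Z1; Z1; Z3; Z1; Z3; Z3], [:: 4; 1; 6; 5; 3; 2; 0]);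
 ([:: false; false; false; false; false; false; true], [:: Z0; Z1; Z1; Z3; Z1; Z3; Z3], [:: 4; 1; 6; 5; 3; 2; 0]);
 ([:: true; false; false; true; true; true; true], [:: Z0; Z1; Z1; Z3; Z1; Z3; Z3], [:: 3; 5; 0; 6; 4; 1; 2]);
 ([:: true; true; false; true; true; true; true], [:: Z0; Z1; Z1; Z3; Z1; Z3; Z3], [:: 3; 5; 0; 6; 4; 1; 2]);
 ([:: false; false; false; false; false; true; true], [:: Z0; Z1; Z1; Z3; Z1; Z3; Z3], [:: 4; 0; 3; 2; 5; 1; 6]);
 ([:: false; false; false; false; true; true; true], [:: Z0; Z1; Z1; Z3; Z1; Z3; Z3], [:: 4; 0; 3; 2; 5; 1; 6]);
 ([:: true; false; true; true; false; true; true], [:: Z0; Z1; Z1; Z3; Z1; Z3; Z3], [:: 3; 1; 4; 0; 6; 5; 2]);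
 ([:: true; false; true; true; false; false; true], [:: Z0; Z1; Z1; Z3; Z1; Z3; Z3], [:: 3; 1; 4; 0; 6; 5; 2]);
 ([:: false; false; true; true; false; false; true], [:: Z0; Z1; Z1; Z3; Z1; Z3; Z3], [:: 4; 1; 6; 5; 3; 2; 0]);
 ([:: false; false; true; false; false; false; true], [:: Z0; Z1; Z1; Z3; Z1; Z3; Z3], [:: 4; 1; 6; 5; 3; 2; 0]);
 ([:: true; false; false; false; true; true; true], [:: Z0; Z1; Z1; Z3; Z1; Z3; Z3], [:: 3; 5; 0; 6; 4; 1; 2]);
 ([:: true; true; false; false; true; true; true], [:: Z0; Z1; Z1; Z3; Z1; Z3; Z3], [:: 3; 5; 0; 6; 4; 1; 2]);
 ([:: false; false; false; false; false; true; false], [:: Z0; Z1; Z1; Z3; Z1; Z3; Z3], [:: 4; 0; 3; 2; 5; 1; 6]);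
 ([:: false; false; false; false; true; true; false], [:: Z0; Z1; Z1; Z3; Z1; Z3; Z3], [:: 4; 0; 3; 2; 5; 1; 6]);
 ([:: true; false; true; true; true; true; true], [:: Z0; Z1; Z1; Z3; Z1; Z3; Z3], [:: 3; 1; 4; 0; 6; 5; 2]);
 ([:: true; false; true; true; true; false; true], [:: Z0; Z1; Z1; Z3; Z1; Z3; Z3], [:: 3; 1; 4; 0; 6; 5; 2]);
 ([:: false; false; false; true; false; false; true], [:: Z0; Z1; Z1; Z3; Z1; Z3; Z3], [:: 4; 1; 6; 5; 2; 3; 0]);
 ([:: false; false; false; false; false; false; true], [:: Z0; Z1; Z1; Z3; Z1; Z3; Z3], [:: 4; 1; 6; 5; 2; 3; 0]);
 ([:: true; false; false; true; true; true; true], [:: Z0; Z1; Z1; Z3; Z1; Z3; Z3], [:: 2; 5; 0; 6; 4; 1; 3]);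
 ([:: true; true; false; true; true; true; true], [:: Z0; Z1; Z1; Z3; Z1; Z3; Z3], [:: 2; 5; 0; 6; 4; 1; 3]);
 ([:: false; false; false; false; false; true; true], [:: Z0; Z1; Z1; Z3; Z1; Z3; Z3], [:: 4; 0; 2; 3; 5; 1; 6]);
 ([:: false; false; false; false; true; true; true], [:: Z0; Z1; Z1; Z3; Z1; Z3; Z3], [:: 4; 0; 2; 3; 5; 1; 6]);
 ([:: true; false; true; true; false; true; true], [:: Z0; Z1; Z1; Z3; Z1; Z3; Z3], [:: 2; 1; 4; 0; 6; 5; 3]);
 ([:: true; false; true; true; false; false; true], [:: Z0; Z1; Z1; Z3; Z1; Z3; Z3], [:: 2; 1; 4; 0; 6; 5; 3]);
 ([:: false; false; true; true; false; false; true], [:: Z0; Z1; Z1; Z3; Z1; Z3; Z3], [:: 4; 1; 6; 5; 2; 3; 0]);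
 ([:: false; false; true; false; false; false; true], [:: Z0; Z1; Z1; Z3; Z1; Z3; Z3], [:: 4; 1; 6; 5; 2; 3; 0]);
 ([:: true; false; false; false; true; true; true], [:: Z0; Z1; Z1; Z3; Z1; Z3; Z3], [:: 2; 5; 0; 6; 4; 1; 3]);
 ([:: true; true; false; false; true; true; true], [:: Z0; Z1; Z1; Z3; Z1; Z3; Z3], [:: 2; 5; 0; 6; 4; 1; 3]);
 ([:: false; false; false; false; false; true; false], [:: Z0; Z1; Z1; Z3; Z1; Z3; Z3], [:: 4; 0; 2; 3; 5; 1; 6]);
 ([:: false; false; false; false; true; true; false], [:: Z0; Z1; Z1; Z3; Z1; Z3; Z3], [:: 4; 0; 2; 3; 5; 1; 6]);
 ([:: true; false; true; true; true; true; true], [:: Z0; Z1; Z1; Z3; Z1; Z3; Z3], [:: 2; 1; 4; 0; 6; 5; 3]);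
 ([:: true; false; true; true; true; false; true], [:: Z0; Z1; Z1; Z3; Z1; Z3; Z3], [:: 2; 1; 4; 0; 6; 5; 3]);
 ([:: false; false; false; true; false; false; true], [:: Z0; Z1; Z1; Z3; Z1; Z3; Z3], [:: 4; 2; 6; 5; 3; 1; 0]);
 ([:: false; false; false; false; false; false; true], [:: Z0; Z1; Z1; Z3; Z1; Z3; Z3], [:: 4; 2; 6; 5; 3; 1; 0]);
 ([:: true; false; false; true; true; true; true], [:: Z0; Z1; Z1; Z3; Z1; Z3; Z3], [:: 3; 5; 0; 6; 4; 2; 1]);
 ([:: true; true; false; true; true; true; true], [:: Z0; Z1; Z1; Z3; Z1; Z3; Z3], [:: 3; 5; 0; 6; 4; 2; 1]);
 ([:: false; false; false; false; false; true; true], [:: Z0; Z1; Z1; Z3; Z1; Z3; Z3], [:: 4; 0; 3; 1; 5; 2; 6]);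
 ([:: false; false; false; false; true; true; true], [:: Z0; Z1; Z1; Z3; Z1; Z3; Z3], [:: 4; 0; 3; 1; 5; 2; 6]);
 ([:: true; false; true; true; false; true; true], [:: Z0; Z1; Z1; Z3; Z1; Z3; Z3], [:: 3; 2; 4; 0; 6; 5; 1]);
 ([:: true; false; true; true; false; false; true], [:: Z0; Z1; Z1; Z3; Z1; Z3; Z3], [:: 3; 2; 4; 0; 6; 5; 1]);
 ([:: false; false; true; true; false; false; true], [:: Z0; Z1; Z1; Z3; Z1; Z3; Z3], [:: 4; 2; 6; 5; 3; 1; 0]);
 ([:: false; false; true; false; false; false; true], [:: Z0; Z1; Z1; Z3; Z1; Z3; Z3], [:: 4; 2; 6; 5; 3; 1; 0]);
 ([:: true; false; false; false; true; true; true], [:: Z0; Z1; Z1; Z3; Z1; Z3; Z3], [:: 3; 5; 0; 6; 4; 2; 1]);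
 ([:: true; true; false; false; true; true; true], [:: Z0; Z1; Z1; Z3; Z1; Z3; Z3], [:: 3; 5; 0; 6; 4; 2; 1]);
 ([:: false; false; false; false; false; true; false], [:: Z0; Z1; Z1; Z3; Z1; Z3; Z3], [:: 4; 0; 3; 1; 5; 2; 6]);
 ([:: false; false; false; false; true; true; false], [:: Z0; Z1; Z1; Z3; Z1; Z3; Z3], [:: 4; 0; 3; 1; 5; 2; 6]);
 ([:: true; false; true; true; true; true; true], [:: Z0; Z1; Z1; Z3; Z1; Z3; Z3], [:: 3; 2; 4; 0; 6; 5; 1]);
 ([:: true; false; true; true; true; false; true], [:: Z0; Z1; Z1; Z3; Z1; Z3; Z3], [:: 3; 2; 4; 0; 6; 5; 1]);
 ([:: false; false; false; false; false; true; true], [:: Z0; Z1; Z1; Z3; Z1; Z3; Z3], [:: 4; 2; 3; 1; 6; 0; 5]);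
 ([:: false; false; false; false; false; true; false], [:: Z0; Z1; Z1; Z3; Z1; Z3; Z3], [:: 4; 2; 3; 1; 6; 0; 5]);
 ([:: false; false; false; false; false; true; true], [:: Z0; Z1; Z1; Z3; Z1; Z3; Z3], [:: 4; 0; 2; 1; 5; 3; 6]);
 ([:: false; false; false; false; true; true; true], [:: Z0; Z1; Z1; Z3; Z1; Z3; Z3], [:: 4; 0; 2; 1; 5; 3; 6]);
 ([:: true; false; true; true; false; true; true], [:: Z0; Z1; Z1; Z3; Z1; Z3; Z3], [:: 2; 3; 4; 0; 6; 5; 1]);
 ([:: true; false; true; true; false; false; true], [:: Z0; Z1; Z1; Z3; Z1; Z3; Z3], [:: 2; 3; 4; 0; 6; 5; 1]);
 ([:: true; false; false; true; true; true; true], [:: Z0; Z1; Z1; Z3; Z1; Z3; Z3], [:: 2; 5; 0; 6; 4; 3; 1]);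
 ([:: true; true; false; true; true; true; true], [:: Z0; Z1; Z1; Z3; Z1; Z3; Z3], [:: 2; 5; 0; 6; 4; 3; 1]);
 ([:: false; false; false; false; true; true; true], [:: Z0; Z1; Z1; Z3; Z1; Z3; Z3], [:: 4; 2; 3; 1; 6; 0; 5]);
 ([:: false; false; false; false; true; true; false], [:: Z0; Z1; Z1; Z3; Z1; Z3; Z3], [:: 4; 2; 3; 1; 6; 0; 5]);
 ([:: false; false; false; false; false; true; false], [:: Z0; Z1; Z1; Z3; Z1; Z3; Z3], [:: 4; 0; 2; 1; 5; 3; 6]);
 ([:: false; false; false; false; true; true; false], [:: Z0; Z1; Z1; Z3; Z1; Z3; Z3], [:: 4; 0; 2; 1; 5; 3; 6]);
 ([:: true; false; true; true; true; true; true], [:: Z0; Z1; Z1; Z3; Z1; Z3; Z3], [:: 2; 3; 4; 0; 6; 5; 1]);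
 ([:: true; false; true; true; true; false; true], [:: Z0; Z1; Z1; Z3; Z1; Z3; Z3], [:: 2; 3; 4; 0; 6; 5; 1]);
 ([:: true; false; false; false; true; true; true], [:: Z0; Z1; Z1; Z3; Z1; Z3; Z3], [:: 2; 5; 0; 6; 4; 3; 1]);
 ([:: true; true; false; false; true; true; true], [:: Z0; Z1; Z1; Z3; Z1; Z3; Z3], [:: 2; 5; 0; 6; 4; 3; 1]);
 ([:: false; false; false; false; false; true; true], [:: Z0; Z1; Z1; Z3; Z1; Z3; Z3], [:: 4; 1; 2; 3; 6; 0; 5]);
 ([:: false; false; false; false; false; true; false], [:: Z0; Z1; Z1; Z3; Z1; Z3; Z3], [:: 4; 1; 2; 3; 6; 0; 5]);
 ([:: false; false; false; false; false; true; true], [:: Z0; Z1; Z1; Z3; Z1; Z3; Z3], [:: 4; 0; 1; 3; 5; 2; 6]);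
 ([:: false; false; false; false; true; true; true], [:: Z0; Z1; Z1; Z3; Z1; Z3; Z3], [:: 4; 0; 1; 3; 5; 2; 6]);
 ([:: true; false; true; true; false; true; true], [:: Z0; Z1; Z1; Z3; Z1; Z3; Z3], [:: 1; 2; 4; 0; 6; 5; 3]);
 ([:: true; false; true; true; false; false; true], [:: Z0; Z1; Z1; Z3; Z1; Z3; Z3], [:: 1; 2; 4; 0; 6; 5; 3]);
 ([:: true; false; false; true; true; true; true], [:: Z0; Z1; Z1; Z3; Z1; Z3; Z3], [:: 1; 5; 0; 6; 4; 2; 3]);
 ([:: true; true; false; true; true; true; true], [:: Z0; Z1; Z1; Z3; Z1; Z3; Z3], [:: 1; 5; 0; 6; 4; 2; 3]);
 ([:: false; false; false; false; true; true; true], [:: Z0; Z1; Z1; Z3; Z1; Z3; Z3], [:: 4; 1; 2; 3; 6; 0; 5]);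
 ([:: false; false; false; false; true; true; false], [:: Z0; Z1; Z1; Z3; Z1; Z3; Z3], [:: 4; 1; 2; 3; 6; 0; 5]);
 ([:: false; false; false; false; false; true; false], [:: Z0; Z1; Z1; Z3; Z1; Z3; Z3], [:: 4; 0; 1; 3; 5; 2; 6]);
 ([:: false; false; false; false; true; true; false], [:: Z0; Z1; Z1; Z3; Z1; Z3; Z3], [:: 4; 0; 1; 3; 5; 2; 6]);
 ([:: true; false; true; true; true; true; true], [:: Z0; Z1; Z1; Z3; Z1; Z3; Z3], [:: 1; 2; 4; 0; 6; 5; 3]);
 ([:: true; false; true; true; true; false; true], [:: Z0; Z1; Z1; Z3; Z1; Z3; Z3], [:: 1; 2; 4; 0; 6; 5; 3]);
 ([:: true; false; false; false; true; true; true], [:: Z0; Z1; Z1; Z3; Z1; Z3; Z3], [:: 1; 5; 0; 6; 4; 2; 3]);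
 ([:: true; true; false; false; true; true; true], [:: Z0; Z1; Z1; Z3; Z1; Z3; Z3], [:: 1; 5; 0; 6; 4; 2; 3]);
 ([:: false; false; false; false; false; true; true], [:: Z0; Z1; Z1; Z3; Z1; Z3; Z3], [:: 4; 1; 3; 2; 6; 0; 5]);
 ([:: false; false; false; false; false; true; false], [:: Z0; Z1; Z1; Z3; Z1; Z3; Z3], [:: 4; 1; 3; 2; 6; 0; 5]);
 ([:: false; false; false; false; false; true; true], [:: Z0; Z1; Z1; Z3; Z1; Z3; Z3], [:: 4; 0; 1; 2; 5; 3; 6]);
 ([:: false; false; false; false; true; true; true], [:: Z0; Z1; Z1; Z3; Z1; Z3; Z3], [:: 4; 0; 1; 2; 5; 3; 6]);
 ([:: true; false; true; true; false; true; true], [:: Z0; Z1; Z1; Z3; Z1; Z3; Z3], [:: 1; 3; 4; 0; 6; 5; 2]);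
 ([:: true; false; true; true; false; false; true], [:: Z0; Z1; Z1; Z3; Z1; Z3; Z3], [:: 1; 3; 4; 0; 6; 5; 2]);
 ([:: true; false; false; true; true; true; true], [:: Z0; Z1; Z1; Z3; Z1; Z3; Z3], [:: 1; 5; 0; 6; 4; 3; 2]);
 ([:: true; true; false; true; true; true; true], [:: Z0; Z1; Z1; Z3; Z1; Z3; Z3], [:: 1; 5; 0; 6; 4; 3; 2]);
 ([:: false; false; false; false; true; true; true], [:: Z0; Z1; Z1; Z3; Z1; Z3; Z3], [:: 4; 1; 3; 2; 6; 0; 5]);
 ([:: false; false; false; false; true; true; false], [:: Z0; Z1; Z1; Z3; Z1; Z3; Z3], [:: 4; 1; 3; 2; 6; 0; 5]);
 ([:: false; false; false; false; false; true; false], [:: Z0; Z1; Z1; Z3; Z1; Z3; Z3], [:: 4; 0; 1; 2; 5; 3; 6]);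
 ([:: false; false; false; false; true; true; false], [:: Z0; Z1; Z1; Z3; Z1; Z3; Z3], [:: 4; 0; 1; 2; 5; 3; 6]);
 ([:: true; false; true; true; true; true; true], [:: Z0; Z1; Z1; Z3; Z1; Z3; Z3], [:: 1; 3; 4; 0; 6; 5; 2]);
 ([:: true; false; true; true; true; false; true], [:: Z0; Z1; Z1; Z3; Z1; Z3; Z3], [:: 1; 3; 4; 0; 6; 5; 2]);
 ([:: true; false; false; false; true; true; true], [:: Z0; Z1; Z1; Z3; Z1; Z3; Z3], [:: 1; 5; 0; 6; 4; 3; 2]);
 ([:: true; true; false; false; true; true; true], [:: Z0; Z1; Z1; Z3; Z1; Z3; Z3], [:: 1; 5; 0; 6; 4; 3; 2]);
 ([:: false; false; false; true; false; false; true], [:: Z0; Z1; Z1; Z3; Z1; Z3; Z3], [:: 4; 1; 6; 5; 3; 0; 2]);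
 ([:: false; false; false; false; false; false; true], [:: Z0; Z1; Z1; Z3; Z1; Z3; Z3], [:: 4; 1; 6; 5; 3; 0; 2]);
 ([:: true; false; false; true; true; true; true], [:: Z0; Z1; Z1; Z3; Z1; Z3; Z3], [:: 3; 6; 1; 5; 4; 0; 2]);
 ([:: true; false; false; false; true; true; true], [:: Z0; Z1; Z1; Z3; Z1; Z3; Z3], [:: 3; 6; 1; 5; 4; 0; 2]);
 ([:: true; false; true; true; false; true; true], [:: Z0; Z1; Z1; Z3; Z1; Z3; Z3], [:: 3; 2; 4; 0; 5; 6; 1]);
 ([:: true; false; true; true; true; true; true], [:: Z0; Z1; Z1; Z3; Z1; Z3; Z3], [:: 3; 2; 4; 0; 5; 6; 1]);
 ([:: false; false; false; false; false; true; true], [:: Z0; Z1; Z1; Z3; Z1; Z3; Z3], [:: 4; 2; 3; 0; 5; 1; 6]);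
 ([:: false; false; false; false; true; true; true], [:: Z0; Z1; Z1; Z3; Z1; Z3; Z3], [:: 4; 2; 3; 0; 5; 1; 6]);
 ([:: false; false; true; true; false; false; true], [:: Z0; Z1; Z1; Z3; Z1; Z3; Z3], [:: 4; 1; 6; 5; 3; 0; 2]);
 ([:: false; false; true; false; false; false; true], [:: Z0; Z1; Z1; Z3; Z1; Z3; Z3], [:: 4; 1; 6; 5; 3; 0; 2]);
 ([:: true; true; false; true; true; true; true], [:: Z0; Z1; Z1; Z3; Z1; Z3; Z3], [:: 3; 6; 1; 5; 4; 0; 2]);
 ([:: true; true; false; false; true; true; true], [:: Z0; Z1; Z1; Z3; Z1; Z3; Z3], [:: 3; 6; 1; 5; 4; 0; 2]);
 ([:: true; false; true; true; false; false; true], [:: Z0; Z1; Z1; Z3; Z1; Z3; Z3], [:: 3; 2; 4; 0; 5; 6; 1]);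
 ([:: true; false; true; true; true; false; true], [:: Z0; Z1; Z1; Z3; Z1; Z3; Z3], [:: 3; 2; 4; 0; 5; 6; 1]);
 ([:: false; false; false; false; false; true; false], [:: Z0; Z1; Z1; Z3; Z1; Z3; Z3], [:: 4; 2; 3; 0; 5; 1; 6]);
 ([:: false; false; false; false; true; true; false], [:: Z0; Z1; Z1; Z3; Z1; Z3; Z3], [:: 4; 2; 3; 0; 5; 1; 6]);
 ([:: false; false; false; true; false; false; true], [:: Z0; Z1; Z1; Z3; Z1; Z3; Z3], [:: 4; 1; 6; 5; 2; 0; 3]);
 ([:: false; false; false; false; false; false; true], [:: Z0; Z1; Z1; Z3; Z1; Z3; Z3], [:: 4; 1; 6; 5; 2; 0; 3]);
 ([:: true; false; false; true; true; true; true], [:: Z0; Z1; Z1; Z3; Z1; Z3; Z3], [:: 2; 6; 1; 5; 4; 0; 3]);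
 ([:: true; false; false; false; true; true; true], [:: Z0; Z1; Z1; Z3; Z1; Z3; Z3], [:: 2; 6; 1; 5; 4; 0; 3]);
 ([:: true; false; true; true; false; true; true], [:: Z0; Z1; Z1; Z3; Z1; Z3; Z3], [:: 2; 3; 4; 0; 5; 6; 1]);
 ([:: true; false; true; true; true; true; true], [:: Z0; Z1; Z1; Z3; Z1; Z3; Z3], [:: 2; 3; 4; 0; 5; 6; 1]);
 ([:: false; false; false; false; false; true; true], [:: Z0; Z1; Z1; Z3; Z1; Z3; Z3], [:: 4; 3; 2; 0; 5; 1; 6]);
 ([:: false; false; false; false; true; true; true], [:: Z0; Z1; Z1; Z3; Z1; Z3; Z3], [:: 4; 3; 2; 0; 5; 1; 6]);
 ([:: false; false; true; true; false; false; true], [:: Z0; Z1; Z1; Z3; Z1; Z3; Z3], [:: 4; 1; 6; 5; 2; 0; 3]);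
 ([:: false; false; true; false; false; false; true], [:: Z0; Z1; Z1; Z3; Z1; Z3; Z3], [:: 4; 1; 6; 5; 2; 0; 3]);
 ([:: true; true; false; true; true; true; true], [:: Z0; Z1; Z1; Z3; Z1; Z3; Z3], [:: 2; 6; 1; 5; 4; 0; 3]);
 ([:: true; true; false; false; true; true; true], [:: Z0; Z1; Z1; Z3; Z1; Z3; Z3], [:: 2; 6; 1; 5; 4; 0; 3]);
 ([:: true; false; true; true; false; false; true], [:: Z0; Z1; Z1; Z3; Z1; Z3; Z3], [:: 2; 3; 4; 0; 5; 6; 1]);
 ([:: true; false; true; true; true; false; true], [:: Z0; Z1; Z1; Z3; Z1; Z3; Z3], [:: 2; 3; 4; 0; 5; 6; 1]);
 ([:: false; false; false; false; false; true; false], [:: Z0; Z1; Z1; Z3; Z1; Z3; Z3], [:: 4; 3; 2; 0; 5; 1; 6]);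
 ([:: false; false; false; false; true; true; false], [:: Z0; Z1; Z1; Z3; Z1; Z3; Z3], [:: 4; 3; 2; 0; 5; 1; 6]);
 ([:: false; false; false; false; false; true; true], [:: Z0; Z1; Z1; Z3; Z1; Z3; Z3], [:: 4; 3; 2; 0; 6; 1; 5]);
 ([:: false; false; false; false; false; true; false], [:: Z0; Z1; Z1; Z3; Z1; Z3; Z3], [:: 4; 3; 2; 0; 6; 1; 5]);
 ([:: true; false; true; true; false; true; true], [:: Z0; Z1; Z1; Z3; Z1; Z3; Z3], [:: 3; 1; 4; 0; 5; 6; 2]);
 ([:: true; false; true; true; true; true; true], [:: Z0; Z1; Z1; Z3; Z1; Z3; Z3], [:: 3; 1; 4; 0; 5; 6; 2]);
 ([:: false; false; false; false; false; true; true], [:: Z0; Z1; Z1; Z3; Z1; Z3; Z3], [:: 4; 1; 3; 0; 5; 2; 6]);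
 ([:: false; false; false; false; true; true; true], [:: Z0; Z1; Z1; Z3; Z1; Z3; Z3], [:: 4; 1; 3; 0; 5; 2; 6]);
 ([:: true; false; true; true; false; true; true], [:: Z0; Z1; Z1; Z3; Z1; Z3; Z3], [:: 3; 2; 4; 1; 6; 5; 0]);
 ([:: true; false; true; true; false; false; true], [:: Z0; Z1; Z1; Z3; Z1; Z3; Z3], [:: 3; 2; 4; 1; 6; 5; 0]);
 ([:: false; false; false; false; true; true; true], [:: Z0; Z1; Z1; Z3; Z1; Z3; Z3], [:: 4; 3; 2; 0; 6; 1; 5]);
 ([:: false; false; false; false; true; true; false], [:: Z0; Z1; Z1; Z3; Z1; Z3; Z3], [:: 4; 3; 2; 0; 6; 1; 5]);
 ([:: true; false; true; true; false; false; true], [:: Z0; Z1; Z1; Z3; Z1; Z3; Z3], [:: 3; 1; 4; 0; 5; 6; 2]);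
 ([:: true; false; true; true; true; false; true], [:: Z0; Z1; Z1; Z3; Z1; Z3; Z3], [:: 3; 1; 4; 0; 5; 6; 2]);
 ([:: false; false; false; false; false; true; false], [:: Z0; Z1; Z1; Z3; Z1; Z3; Z3], [:: 4; 1; 3; 0; 5; 2; 6]);
 ([:: false; false; false; false; true; true; false], [:: Z0; Z1; Z1; Z3; Z1; Z3; Z3], [:: 4; 1; 3; 0; 5; 2; 6]);
 ([:: true; false; true; true; true; true; true], [:: Z0; Z1; Z1; Z3; Z1; Z3; Z3], [:: 3; 2; 4; 1; 6; 5; 0]);
 ([:: true; false; true; true; true; false; true], [:: Z0; Z1; Z1; Z3; Z1; Z3; Z3], [:: 3; 2; 4; 1; 6; 5; 0]);
 ([:: false; false; false; false; false; true; true], [:: Z0; Z1; Z1; Z3; Z1; Z3; Z3], [:: 4; 2; 3; 0; 6; 1; 5]);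
 ([:: false; false; false; false; false; true; false], [:: Z0; Z1; Z1; Z3; Z1; Z3; Z3], [:: 4; 2; 3; 0; 6; 1; 5]);
 ([:: false; false; false; false; false; true; true], [:: Z0; Z1; Z1; Z3; Z1; Z3; Z3], [:: 4; 1; 2; 0; 5; 3; 6]);
 ([:: false; false; false; false; true; true; true], [:: Z0; Z1; Z1; Z3; Z1; Z3; Z3], [:: 4; 1; 2; 0; 5; 3; 6]);
 ([:: true; false; true; true; false; true; true], [:: Z0; Z1; Z1; Z3; Z1; Z3; Z3], [:: 2; 3; 4; 1; 6; 5; 0]);
 ([:: true; false; true; true; false; false; true], [:: Z0; Z1; Z1; Z3; Z1; Z3; Z3], [:: 2; 3; 4; 1; 6; 5; 0]);
 ([:: true; false; true; true; false; true; true], [:: Z0; Z1; Z1; Z3; Z1; Z3; Z3], [:: 2; 1; 4; 0; 5; 6; 3]);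
 ([:: true; false; true; true; true; true; true], [:: Z0; Z1; Z1; Z3; Z1; Z3; Z3], [:: 2; 1; 4; 0; 5; 6; 3]);
 ([:: false; false; false; false; true; true; true], [:: Z0; Z1; Z1; Z3; Z1; Z3; Z3], [:: 4; 2; 3; 0; 6; 1; 5]);
 ([:: false; false; false; false; true; true; false], [:: Z0; Z1; Z1; Z3; Z1; Z3; Z3], [:: 4; 2; 3; 0; 6; 1; 5]);
 ([:: false; false; false; false; false; true; false], [:: Z0; Z1; Z1; Z3; Z1; Z3; Z3], [:: 4; 1; 2; 0; 5; 3; 6]);
 ([:: false; false; false; false; true; true; false], [:: Z0; Z1; Z1; Z3; Z1; Z3; Z3], [:: 4; 1; 2; 0; 5; 3; 6]);
 ([:: true; false; true; true; true; true; true], [:: Z0; Z1; Z1; Z3; Z1; Z3; Z3], [:: 2; 3; 4; 1; 6; 5; 0]);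
 ([:: true; false; true; true; true; false; true], [:: Z0; Z1; Z1; Z3; Z1; Z3; Z3], [:: 2; 3; 4; 1; 6; 5; 0]);
 ([:: true; false; true; true; false; false; true], [:: Z0; Z1; Z1; Z3; Z1; Z3; Z3], [:: 2; 1; 4; 0; 5; 6; 3]);
 ([:: true; false; true; true; true; false; true], [:: Z0; Z1; Z1; Z3; Z1; Z3; Z3], [:: 2; 1; 4; 0; 5; 6; 3]);
 ([:: false; false; false; false; false; true; true], [:: Z0; Z1; Z1; Z3; Z1; Z3; Z3], [:: 4; 1; 2; 0; 6; 3; 5]);
 ([:: false; false; false; false; false; true; false], [:: Z0; Z1; Z1; Z3; Z1; Z3; Z3], [:: 4; 1; 2; 0; 6; 3; 5]);
 ([:: true; false; false; true; true; true; true], [:: Z0; Z1; Z1; Z3; Z1; Z3; Z3], [:: 1; 6; 2; 5; 4; 0; 3]);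
 ([:: true; false; false; false; true; true; true], [:: Z0; Z1; Z1; Z3; Z1; Z3; Z3], [:: 1; 6; 2; 5; 4; 0; 3]);
 ([:: true; false; true; true; false; true; true], [:: Z0; Z1; Z1; Z3; Z1; Z3; Z3], [:: 1; 3; 4; 0; 5; 6; 2]);
 ([:: true; false; true; true; true; true; true], [:: Z0; Z1; Z1; Z3; Z1; Z3; Z3], [:: 1; 3; 4; 0; 5; 6; 2]);
 ([:: false; false; false; true; false; false; true], [:: Z0; Z1; Z1; Z3; Z1; Z3; Z3], [:: 4; 1; 5; 6; 3; 0; 2]);
 ([:: false; false; true; true; false; false; true], [:: Z0; Z1; Z1; Z3; Z1; Z3; Z3], [:: 4; 1; 5; 6; 3; 0; 2]);
 ([:: false; false; false; false; true; true; true], [:: Z0; Z1; Z1; Z3; Z1; Z3; Z3], [:: 4; 1; 2; 0; 6; 3; 5]);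
 ([:: false; false; false; false; true; true; false], [:: Z0; Z1; Z1; Z3; Z1; Z3; Z3], [:: 4; 1; 2; 0; 6; 3; 5]);
 ([:: true; true; false; true; true; true; true], [:: Z0; Z1; Z1; Z3; Z1; Z3; Z3], [:: 1; 6; 2; 5; 4; 0; 3]);
 ([:: true; true; false; false; true; true; true], [:: Z0; Z1; Z1; Z3; Z1; Z3; Z3], [:: 1; 6; 2; 5; 4; 0; 3]);
 ([:: true; false; true; true; false; false; true], [:: Z0; Z1; Z1; Z3; Z1; Z3; Z3], [:: 1; 3; 4; 0; 5; 6; 2]);
 ([:: true; false; true; true; true; false; true], [:: Z0; Z1; Z1; Z3; Z1; Z3; Z3], [:: 1; 3; 4; 0; 5; 6; 2]);
 ([:: false; false; false; false; false; false; true], [:: Z0; Z1; Z1; Z3; Z1; Z3; Z3], [:: 4; 1; 5; 6; 3; 0; 2]);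
 ([:: false; false; true; false; false; false; true], [:: Z0; Z1; Z1; Z3; Z1; Z3; Z3], [:: 4; 1; 5; 6; 3; 0; 2]);
 ([:: false; false; false; false; false; true; true], [:: Z0; Z1; Z1; Z3; Z1; Z3; Z3], [:: 4; 1; 3; 0; 6; 2; 5]);
 ([:: false; false; false; false; false; true; false], [:: Z0; Z1; Z1; Z3; Z1; Z3; Z3], [:: 4; 1; 3; 0; 6; 2; 5]);
 ([:: false; false; false; true; false; false; true], [:: Z0; Z1; Z1; Z3; Z1; Z3; Z3], [:: 4; 1; 5; 6; 2; 0; 3]);
 ([:: false; false; true; true; false; false; true], [:: Z0; Z1; Z1; Z3; Z1; Z3; Z3], [:: 4; 1; 5; 6; 2; 0; 3]);
 ([:: true; false; false; true; true; true; true], [:: Z0; Z1; Z1; Z3; Z1; Z3; Z3], [:: 1; 6; 3; 5; 4; 0; 2]);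
 ([:: true; false; false; false; true; true; true], [:: Z0; Z1; Z1; Z3; Z1; Z3; Z3], [:: 1; 6; 3; 5; 4; 0; 2]);
 ([:: true; false; true; true; false; true; true], [:: Z0; Z1; Z1; Z3; Z1; Z3; Z3], [:: 1; 2; 4; 0; 5; 6; 3]);
 ([:: true; false; true; true; true; true; true], [:: Z0; Z1; Z1; Z3; Z1; Z3; Z3], [:: 1; 2; 4; 0; 5; 6; 3]);
 ([:: false; false; false; false; true; true; true], [:: Z0; Z1; Z1; Z3; Z1; Z3; Z3], [:: 4; 1; 3; 0; 6; 2; 5]);
 ([:: false; false; false; false; true; true; false], [:: Z0; Z1; Z1; Z3; Z1; Z3; Z3], [:: 4; 1; 3; 0; 6; 2; 5]);
 ([:: false; false; false; false; false; false; true], [:: Z0; Z1; Z1; Z3; Z1; Z3; Z3], [:: 4; 1; 5; 6; 2; 0; 3]);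
 ([:: false; false; true; false; false; false; true], [:: Z0; Z1; Z1; Z3; Z1; Z3; Z3], [:: 4; 1; 5; 6; 2; 0; 3]);
 ([:: true; true; false; true; true; true; true], [:: Z0; Z1; Z1; Z3; Z1; Z3; Z3], [:: 1; 6; 3; 5; 4; 0; 2]);
 ([:: true; true; false; false; true; true; true], [:: Z0; Z1; Z1; Z3; Z1; Z3; Z3], [:: 1; 6; 3; 5; 4; 0; 2]);
 ([:: true; false; true; true; false; false; true], [:: Z0; Z1; Z1; Z3; Z1; Z3; Z3], [:: 1; 2; 4; 0; 5; 6; 3]);
 ([:: true; false; true; true; true; false; true], [:: Z0; Z1; Z1; Z3; Z1; Z3; Z3], [:: 1; 2; 4; 0; 5; 6; 3]);
 ([:: true; false; true; true; false; true; true], [:: Z0; Z1; Z1; Z3; Z1; Z3; Z3], [:: 0; 1; 4; 2; 6; 5; 3]);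
 ([:: true; false; true; true; false; false; true], [:: Z0; Z1; Z1; Z3; Z1; Z3; Z3], [:: 0; 1; 4; 2; 6; 5; 3]);
 ([:: false; false; false; false; false; true; true], [:: Z0; Z1; Z1; Z3; Z1; Z3; Z3], [:: 4; 2; 0; 3; 5; 1; 6]);
 ([:: false; false; false; false; true; true; true], [:: Z0; Z1; Z1; Z3; Z1; Z3; Z3], [:: 4; 2; 0; 3; 5; 1; 6]);
 ([:: false; false; false; false; false; true; true], [:: Z0; Z1; Z1; Z3; Z1; Z3; Z3], [:: 4; 0; 1; 3; 6; 2; 5]);
 ([:: false; false; false; false; false; true; false], [:: Z0; Z1; Z1; Z3; Z1; Z3; Z3], [:: 4; 0; 1; 3; 6; 2; 5]);
 ([:: true; true; false; true; false; true; true], [:: Z0; Z1; Z1; Z3; Z1; Z3; Z3], [:: 0; 4; 5; 1; 2; 3; 6]);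
 ([:: true; true; true; true; false; true; true], [:: Z0; Z1; Z1; Z3; Z1; Z3; Z3], [:: 0; 4; 5; 1; 2; 3; 6]);
 ([:: true; false; true; true; true; true; true], [:: Z0; Z1; Z1; Z3; Z1; Z3; Z3], [:: 0; 1; 4; 2; 6; 5; 3]);
 ([:: true; false; true; true; true; false; true], [:: Z0; Z1; Z1; Z3; Z1; Z3; Z3], [:: 0; 1; 4; 2; 6; 5; 3]);
 ([:: false; false; false; false; false; true; false], [:: Z0; Z1; Z1; Z3; Z1; Z3; Z3], [:: 4; 2; 0; 3; 5; 1; 6]);
 ([:: false; false; false; false; true; true; false], [:: Z0; Z1; Z1; Z3; Z1; Z3; Z3], [:: 4; 2; 0; 3; 5; 1; 6]);
 ([:: false; false; false; false; true; true; true], [:: Z0; Z1; Z1; Z3; Z1; Z3; Z3], [:: 4; 0; 1; 3; 6; 2; 5]);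
 ([:: false; false; false; false; true; true; false], [:: Z0; Z1; Z1; Z3; Z1; Z3; Z3], [:: 4; 0; 1; 3; 6; 2; 5]);
 ([:: true; true; false; true; false; true; false], [:: Z0; Z1; Z1; Z3; Z1; Z3; Z3], [:: 0; 4; 5; 1; 2; 3; 6]);
 ([:: true; true; true; true; false; true; false], [:: Z0; Z1; Z1; Z3; Z1; Z3; Z3], [:: 0; 4; 5; 1; 2; 3; 6]);
 ([:: false; false; false; false; false; true; true], [:: Z0; Z1; Z1; Z3; Z1; Z3; Z3], [:: 4; 0; 1; 2; 6; 3; 5]);
 ([:: false; false; false; false; false; true; false], [:: Z0; Z1; Z1; Z3; Z1; Z3; Z3], [:: 4; 0; 1; 2; 6; 3; 5]);
 ([:: true; false; true; true; false; true; true], [:: Z0; Z1; Z1; Z3; Z1; Z3; Z3], [:: 0; 1; 4; 3; 6; 5; 2]);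
 ([:: true; false; true; true; false; false; true], [:: Z0; Z1; Z1; Z3; Z1; Z3; Z3], [:: 0; 1; 4; 3; 6; 5; 2]);
 ([:: true; false; false; true; true; true; true], [:: Z0; Z1; Z1; Z3; Z1; Z3; Z3], [:: 0; 5; 3; 6; 4; 1; 2]);
 ([:: true; true; false; true; true; true; true], [:: Z0; Z1; Z1; Z3; Z1; Z3; Z3], [:: 0; 5; 3; 6; 4; 1; 2]);
 ([:: false; false; false; false; false; true; true], [:: Z0; Z1; Z1; Z3; Z1; Z3; Z3], [:: 4; 3; 0; 2; 5; 1; 6]);
 ([:: false; false; false; false; true; true; true], [:: Z0; Z1; Z1; Z3; Z1; Z3; Z3], [:: 4; 3; 0; 2; 5; 1; 6]);
 ([:: false; false; false; false; true; true; true], [:: Z0; Z1; Z1; Z3; Z1; Z3; Z3], [:: 4; 0; 1; 2; 6; 3; 5]);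
 ([:: false; false; false; false; true; true; false], [:: Z0; Z1; Z1; Z3; Z1; Z3; Z3], [:: 4; 0; 1; 2; 6; 3; 5]);
 ([:: true; false; true; true; true; true; true], [:: Z0; Z1; Z1; Z3; Z1; Z3; Z3], [:: 0; 1; 4; 3; 6; 5; 2]);
 ([:: true; false; true; true; true; false; true], [:: Z0; Z1; Z1; Z3; Z1; Z3; Z3], [:: 0; 1; 4; 3; 6; 5; 2]);
 ([:: true; false; false; false; true; true; true], [:: Z0; Z1; Z1; Z3; Z1; Z3; Z3], [:: 0; 5; 3; 6; 4; 1; 2]);
 ([:: true; true; false; false; true; true; true], [:: Z0; Z1; Z1; Z3; Z1; Z3; Z3], [:: 0; 5; 3; 6; 4; 1; 2]);
 ([:: false; false; false; false; false; true; false], [:: Z0; Z1; Z1; Z3; Z1; Z3; Z3], [:: 4; 3; 0; 2; 5; 1; 6]);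
 ([:: false; false; false; false; true; true; false], [:: Z0; Z1; Z1; Z3; Z1; Z3; Z3], [:: 4; 3; 0; 2; 5; 1; 6]);
 ([:: false; false; false; false; false; true; true], [:: Z0; Z1; Z1; Z3; Z1; Z3; Z3], [:: 4; 0; 2; 3; 6; 1; 5]);
 ([:: false; false; false; false; false; true; false], [:: Z0; Z1; Z1; Z3; Z1; Z3; Z3], [:: 4; 0; 2; 3; 6; 1; 5]);
 ([:: false; false; false; false; false; true; true], [:: Z0; Z1; Z1; Z3; Z1; Z3; Z3], [:: 4; 1; 0; 3; 5; 2; 6]);
 ([:: false; false; false; false; true; true; true], [:: Z0; Z1; Z1; Z3; Z1; Z3; Z3], [:: 4; 1; 0; 3; 5; 2; 6]);
 ([:: true; false; false; true; true; true; true], [:: Z0; Z1; Z1; Z3; Z1; Z3; Z3], [:: 0; 6; 2; 5; 4; 3; 1]);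
 ([:: true; false; false; false; true; true; true], [:: Z0; Z1; Z1; Z3; Z1; Z3; Z3], [:: 0; 6; 2; 5; 4; 3; 1]);
 ([:: true; false; true; true; false; true; true], [:: Z0; Z1; Z1; Z3; Z1; Z3; Z3], [:: 0; 1; 4; 3; 5; 6; 2]);
 ([:: true; false; true; true; true; true; true], [:: Z0; Z1; Z1; Z3; Z1; Z3; Z3], [:: 0; 1; 4; 3; 5; 6; 2]);
 ([:: false; false; false; false; true; true; true], [:: Z0; Z1; Z1; Z3; Z1; Z3; Z3], [:: 4; 0; 2; 3; 6; 1; 5]);
 ([:: false; false; false; false; true; true; false], [:: Z0; Z1; Z1; Z3; Z1; Z3; Z3], [:: 4; 0; 2; 3; 6; 1; 5]);
 ([:: false; false; false; false; false; true; false], [:: Z0; Z1; Z1; Z3; Z1; Z3; Z3], [:: 4; 1; 0; 3; 5; 2; 6]);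
 ([:: false; false; false; false; true; true; false], [:: Z0; Z1; Z1; Z3; Z1; Z3; Z3], [:: 4; 1; 0; 3; 5; 2; 6]);
 ([:: true; true; false; true; true; true; true], [:: Z0; Z1; Z1; Z3; Z1; Z3; Z3], [:: 0; 6; 2; 5; 4; 3; 1]);
 ([:: true; true; false; false; true; true; true], [:: Z0; Z1; Z1; Z3; Z1; Z3; Z3], [:: 0; 6; 2; 5; 4; 3; 1]);
 ([:: true; false; true; true; false; false; true], [:: Z0; Z1; Z1; Z3; Z1; Z3; Z3], [:: 0; 1; 4; 3; 5; 6; 2]);
 ([:: true; false; true; true; true; false; true], [:: Z0; Z1; Z1; Z3; Z1; Z3; Z3], [:: 0; 1; 4; 3; 5; 6; 2]);
 ([:: false; false; false; false; false; true; true], [:: Z0; Z1; Z1; Z3; Z1; Z3; Z3], [:: 4; 0; 3; 2; 6; 1; 5]);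
 ([:: false; false; false; false; false; true; false], [:: Z0; Z1; Z1; Z3; Z1; Z3; Z3], [:: 4; 0; 3; 2; 6; 1; 5]);
 ([:: false; false; false; true; false; false; true], [:: Z0; Z1; Z1; Z3; Z1; Z3; Z3], [:: 4; 0; 5; 6; 1; 2; 3]);
 ([:: false; false; true; true; false; false; true], [:: Z0; Z1; Z1; Z3; Z1; Z3; Z3], [:: 4; 0; 5; 6; 1; 2; 3]);
 ([:: true; false; false; true; true; true; true], [:: Z0; Z1; Z1; Z3; Z1; Z3; Z3], [:: 0; 6; 3; 5; 4; 2; 1]);
 ([:: true; false; false; false; true; true; true], [:: Z0; Z1; Z1; Z3; Z1; Z3; Z3], [:: 0; 6; 3; 5; 4; 2; 1]);
 ([:: true; false; true; true; false; true; true], [:: Z0; Z1; Z1; Z3; Z1; Z3; Z3], [:: 0; 1; 4; 2; 5; 6; 3]);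
 ([:: true; false; true; true; true; true; true], [:: Z0; Z1; Z1; Z3; Z1; Z3; Z3], [:: 0; 1; 4; 2; 5; 6; 3]);
 ([:: false; false; false; false; true; true; true], [:: Z0; Z1; Z1; Z3; Z1; Z3; Z3], [:: 4; 0; 3; 2; 6; 1; 5]);
 ([:: false; false; false; false; true; true; false], [:: Z0; Z1; Z1; Z3; Z1; Z3; Z3], [:: 4; 0; 3; 2; 6; 1; 5]);
 ([:: false; false; false; false; false; false; true], [:: Z0; Z1; Z1; Z3; Z1; Z3; Z3], [:: 4; 0; 5; 6; 1; 2; 3]);
 ([:: false; false; true; false; false; false; true], [:: Z0; Z1; Z1; Z3; Z1; Z3; Z3], [:: 4; 0; 5; 6; 1; 2; 3]);
 ([:: true; true; false; true; true; true; true], [:: Z0; Z1; Z1; Z3; Z1; Z3; Z3], [:: 0; 6; 3; 5; 4; 2; 1]);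
 ([:: true; true; false; false; true; true; true], [:: Z0; Z1; Z1; Z3; Z1; Z3; Z3], [:: 0; 6; 3; 5; 4; 2; 1]);
 ([:: true; false; true; true; false; false; true], [:: Z0; Z1; Z1; Z3; Z1; Z3; Z3], [:: 0; 1; 4; 2; 5; 6; 3]);
 ([:: true; false; true; true; true; false; true], [:: Z0; Z1; Z1; Z3; Z1; Z3; Z3], [:: 0; 1; 4; 2; 5; 6; 3]);
 ([:: false; false; false; false; false; true; true], [:: Z0; Z1; Z1; Z3; Z1; Z3; Z3], [:: 4; 0; 2; 1; 6; 3; 5]);
 ([:: false; false; false; false; false; true; false], [:: Z0; Z1; Z1; Z3; Z1; Z3; Z3], [:: 4; 0; 2; 1; 6; 3; 5]);
 ([:: true; true; false; true; false; true; true], [:: Z0; Z1; Z1; Z3; Z1; Z3; Z3], [:: 0; 4; 6; 1; 2; 3; 5]);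
 ([:: true; true; false; true; false; true; false], [:: Z0; Z1; Z1; Z3; Z1; Z3; Z3], [:: 0; 4; 6; 1; 2; 3; 5]);
 ([:: true; false; false; true; true; true; true], [:: Z0; Z1; Z1; Z3; Z1; Z3; Z3], [:: 0; 5; 3; 6; 4; 2; 1]);
 ([:: true; true; false; true; true; true; true], [:: Z0; Z1; Z1; Z3; Z1; Z3; Z3], [:: 0; 5; 3; 6; 4; 2; 1]);
 ([:: false; false; false; false; false; true; true], [:: Z0; Z1; Z1; Z3; Z1; Z3; Z3], [:: 4; 3; 0; 1; 5; 2; 6]);
 ([:: false; false; false; false; true; true; true], [:: Z0; Z1; Z1; Z3; Z1; Z3; Z3], [:: 4; 3; 0; 1; 5; 2; 6]);
 ([:: false; false; false; false; true; true; true], [:: Z0; Z1; Z1; Z3; Z1; Z3; Z3], [:: 4; 0; 2; 1; 6; 3; 5]);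
 ([:: false; false; false; false; true; true; false], [:: Z0; Z1; Z1; Z3; Z1; Z3; Z3], [:: 4; 0; 2; 1; 6; 3; 5]);
 ([:: true; true; true; true; false; true; true], [:: Z0; Z1; Z1; Z3; Z1; Z3; Z3], [:: 0; 4; 6; 1; 2; 3; 5]);
 ([:: true; true; true; true; false; true; false], [:: Z0; Z1; Z1; Z3; Z1; Z3; Z3], [:: 0; 4; 6; 1; 2; 3; 5]);
 ([:: true; false; false; false; true; true; true], [:: Z0; Z1; Z1; Z3; Z1; Z3; Z3], [:: 0; 5; 3; 6; 4; 2; 1]);
 ([:: true; true; false; false; true; true; true], [:: Z0; Z1; Z1; Z3; Z1; Z3; Z3], [:: 0; 5; 3; 6; 4; 2; 1]);
 ([:: false; false; false; false; false; true; false], [:: Z0; Z1; Z1; Z3; Z1; Z3; Z3], [:: 4; 3; 0; 1; 5; 2; 6]);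
 ([:: false; false; false; false; true; true; false], [:: Z0; Z1; Z1; Z3; Z1; Z3; Z3], [:: 4; 3; 0; 1; 5; 2; 6]);
 ([:: false; false; false; false; false; true; true], [:: Z0; Z1; Z1; Z3; Z1; Z3; Z3], [:: 4; 0; 3; 1; 6; 2; 5]);
 ([:: false; false; false; false; false; true; false], [:: Z0; Z1; Z1; Z3; Z1; Z3; Z3], [:: 4; 0; 3; 1; 6; 2; 5]);
 ([:: false; false; false; false; false; true; true], [:: Z0; Z1; Z1; Z3; Z1; Z3; Z3], [:: 4; 2; 0; 1; 5; 3; 6]);
 ([:: false; false; false; false; true; true; true], [:: Z0; Z1; Z1; Z3; Z1; Z3; Z3], [:: 4; 2; 0; 1; 5; 3; 6]);
 ([:: true; false; false; true; true; true; true], [:: Z0; Z1; Z1; Z3; Z1; Z3; Z3], [:: 0; 6; 3; 5; 4; 1; 2]);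
 ([:: true; false; false; false; true; true; true], [:: Z0; Z1; Z1; Z3; Z1; Z3; Z3], [:: 0; 6; 3; 5; 4; 1; 2]);
 ([:: true; false; false; true; true; true; true], [:: Z0; Z1; Z1; Z3; Z1; Z3; Z3], [:: 0; 5; 2; 6; 4; 3; 1]);
 ([:: true; true; false; true; true; true; true], [:: Z0; Z1; Z1; Z3; Z1; Z3; Z3], [:: 0; 5; 2; 6; 4; 3; 1]);
 ([:: false; false; false; false; true; true; true], [:: Z0; Z1; Z1; Z3; Z1; Z3; Z3], [:: 4; 0; 3; 1; 6; 2; 5]);
 ([:: false; false; false; false; true; true; false], [:: Z0; Z1; Z1; Z3; Z1; Z3; Z3], [:: 4; 0; 3; 1; 6; 2; 5]);
 ([:: false; false; false; false; false; true; false], [:: Z0; Z1; Z1; Z3; Z1; Z3; Z3], [:: 4; 2; 0; 1; 5; 3; 6]);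
 ([:: false; false; false; false; true; true; false], [:: Z0; Z1; Z1; Z3; Z1; Z3; Z3], [:: 4; 2; 0; 1; 5; 3; 6]);
 ([:: true; true; false; true; true; true; true], [:: Z0; Z1; Z1; Z3; Z1; Z3; Z3], [:: 0; 6; 3; 5; 4; 1; 2]);
 ([:: true; true; false; false; true; true; true], [:: Z0; Z1; Z1; Z3; Z1; Z3; Z3], [:: 0; 6; 3; 5; 4; 1; 2]);
 ([:: true; false; false; false; true; true; true], [:: Z0; Z1; Z1; Z3; Z1; Z3; Z3], [:: 0; 5; 2; 6; 4; 3; 1]);
 ([:: true; true; false; false; true; true; true], [:: Z0; Z1; Z1; Z3; Z1; Z3; Z3], [:: 0; 5; 2; 6; 4; 3; 1])].
Definition checkL (L : seq w7) (g : cert) := validc g && all (fun x => actw g x \in C0w) L.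
Definition allchecks := all2 checkL (run rep1) certs1 && all2 checkL (run rep2) certs2.
Lemma allchecksT : allchecks = true.
Proof. vm_cast_no_check (erefl true). Qed.

Definition sgn (z : z5) : bool := match z with Z3 | Z4 => true | _ => false end.
Definition sortp (w : w7) : seq nat :=
  [seq i <- iota 0 7 | lz (coord i w) == 2] ++ [seq i <- iota 0 7 | lz (coord i w) == 1]
  ++ [seq i <- iota 0 7 | lz (coord i w) == 0].
Definition normc (w : w7) : cert := ([seq sgn (coord i w) | i <- sortp w], nseq 7 Z0, sortp w).
Lemma normcT : all (fun w => (coord 0 w != Z0) || [&& validc (normc w), actw (normc w) w \in [:: rep1; rep2]
   & actw (normc w) zw == zw]) W9.
Proof. Time vm_compute. reflexivity. Qed.

Lemma C0w_ok : uniq C0w && all (fun a => all (fun b => (a == b) || (9 <= dist a b)) C0w) C0w.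
Proof. by vm_compute. Qed.

Module GGr.
Import GRing.Theory.

Lemma sqE (k : 'Z_7) : is_square7 k = (val k \in [:: 0; 1; 2; 4]).
Proof.
apply/existsP/idP.
  by case=> y /eqP <-; case: y => [[|[|[|[|[|[|[|y]]]]]]] Hy].
case: k => [[|[|[|[|[|[|[|k]]]]]]] Hk] //= _.
- by exists 0%R; apply/eqP/val_inj.
- by exists 1%R; apply/eqP/val_inj.
- by exists (inZp 3); apply/eqP/val_inj.
- by exists (inZp 2); apply/eqP/val_inj.
Qed.

Lemma MtE (i j : 'Z_7) : z5_of (Mt i j) = mtz ((val i + val j) %% 7).
Proof.
rewrite /Mt.
have -> : (val i + val j) %% 7 = val (i + j)%R by [].
case: (i + j)%R => [[|[|[|[|[|[|[|k]]]]]]] Hk] //=; rewrite sqE //.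
Qed.

Lemma coord_rowz m k : k < 7 -> coord k (rowz m) = mtz ((m + k) %% 7).
Proof. by case: k => [|[|[|[|[|[|[|k]]]]]]]. Qed.
Lemma coord_rownz m k : k < 7 -> coord k (rownz m) = negz (mtz ((m + k) %% 7)).
Proof. by case: k => [|[|[|[|[|[|[|k]]]]]]]. Qed.
Lemma coord_zw k : coord k zw = Z0.
Proof. by case: k => [|[|[|[|[|[|[|k]]]]]]]. Qed.

Lemma negE (a : 'Z_5) : z5_of (- a)%R = negz (z5_of a).
Proof. by case: a => [[|[|[|[|[|k]]]]] Hk]. Qed.

Lemma enc_Mrow (i : 'Z_7) : enc (Mrow i) = rowz (val i).
Proof.
apply: w7_ext => k hk; rewrite coord_enc // coord_rowz // /Mrow ffunE MtE.
by rewrite /= inordK.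
Qed.

Lemma enc_Mrow_neg (i : 'Z_7) : enc (Mrow_neg i) = rownz (val i).
Proof.
apply: w7_ext => k hk; rewrite coord_enc // coord_rownz // /Mrow_neg ffunE negE MtE.
by rewrite /= inordK.
Qed.

Lemma enc0 : enc [ffun => 0%R] = zw.
Proof. by apply: w7_ext => k hk; rewrite coord_enc // coord_zw ffunE. Qed.

Definition C0l : seq (word 5 7) :=
  [seq Mrow (inZp m) | m <- iota 0 7] ++ [seq Mrow_neg (inZp m) | m <- iota 0 7] ++ [:: [ffun => 0%R]].

Lemma valZ7 m : m < 7 -> val (inZp m : 'Z_7) = m.
Proof. by move=> hm; rewrite /= modn_small. Qed.

Lemma C0lE : map enc C0l = C0w.
Proof.
rewrite /C0l /C0w !map_cat -!map_comp; congr (_ ++ (_ ++ _)); last by rewrite /= enc0.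
  by apply/eq_in_map => m; rewrite mem_iota => /andP[_ hm] /=; rewrite enc_Mrow valZ7.
by apply/eq_in_map => m; rewrite mem_iota => /andP[_ hm] /=; rewrite enc_Mrow_neg valZ7.
Qed.

Lemma C0E : C0 = [set x in C0l].
Proof.
apply/setP => w; have -> : (w \in [set x in C0l]) = (w \in C0l) by rewrite inE.
rewrite /C0 !in_setU in_set1 /C0l !mem_cat mem_seq1 -orbA.
congr (_ || (_ || _)).
  apply/imsetP/mapP => [[i _ ->]|[m hm ->]]; last by exists (inZp m).
  exists (val i); first by rewrite mem_iota ltn_ord.
  by congr Mrow; apply/val_inj; rewrite /= modn_small ?ltn_ord.
apply/imsetP/mapP => [[i _ ->]|[m hm ->]]; last by exists (inZp m).
exists (val i); first by rewrite mem_iota ltn_ord.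
  by congr Mrow_neg; apply/val_inj; rewrite /= modn_small ?ltn_ord.
Qed.

Lemma C0_enc w : (w \in C0) = (enc w \in C0w).
Proof. by rewrite C0E inE -C0lE (mem_map enc_inj). Qed.

Lemma card_C0 : #|C0| = 15.
Proof.
have /andP[U _] := C0w_ok.
rewrite C0E cardsE; apply/card_uniqP.
  by move: U; rewrite -C0lE (map_inj_uniq enc_inj).
Qed.

Lemma min_C0 : min_lee_ge C0 9.
Proof.
have /andP[_ /allP H] := C0w_ok.
apply/forallP => x; apply/implyP; rewrite C0_enc => xC.
apply/forallP => y; apply/implyP; rewrite C0_enc => yC; apply/implyP => xy.
have /allP := H _ xC; move/(_ _ yC); rewrite (inj_eq enc_inj) (negbTE xy) /= lee_distE //.
Qed.

End GGr.
Import GGr.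


Lemma get5_cnt5 i v l : get5 (cnt5 i l) v = count (slot i v) l.
Proof.
elim: l v => [|x l IH] v /=; first by case: v.
move: (IH); case: (cnt5 i l) => [[[[a b] c] d] e] IH'.
rewrite /slot; case: (coord i x); case: v => /=;
  by rewrite -?(IH' Z0) -?(IH' Z1) -?(IH' Z2) -?(IH' Z3) -?(IH' Z4).
Qed.

Definition pinv chosen (acc : option ((nat * z5) * nat)) :=
  if acc is Some ((i, v), _) then (i < 7) && (count (slot i v) chosen < 3) else true.

Lemma inner_spec chosen cands i : i < 7 -> forall (l : seq z5) acc, pinv chosen acc ->
  pinv chosen (foldl (pstep chosen (cnt5 i chosen) (cnt5 i cands) i) acc l) /\
  (foldl (pstep chosen (cnt5 i chosen) (cnt5 i cands) i) acc l = None ->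
     acc = None /\ forall v, v \in l -> 3 <= count (slot i v) chosen).
Proof.
move=> hi; elim=> [|v l IH] acc Pa /=; first by split=> // ->.
have Pa' : pinv chosen (pstep chosen (cnt5 i chosen) (cnt5 i cands) i acc v).
  rewrite /pstep get5_cnt5; case: ifP => // lt.
  by case: acc Pa => [[[j w] c']|] /= Pa; [case: ifP => _ /=; rewrite ?hi ?lt ?Pa | rewrite hi lt].
have [IH1 IH2] := IH _ Pa'; split=> // /IH2 [E H].
move: E; rewrite /pstep get5_cnt5; case: ifP => [lt|].
  by case: acc {Pa Pa' IH1 IH2 H} => [[[j w] c']|] //=; case: ifP.
move/negbT; rewrite -leqNgt => ge ->; split=> // u; rewrite in_cons => /orP[/eqP->|]//.
exact: H.
Qed.

Lemma outer_spec chosen cands : forall (l : seq nat) acc, (forall i, i \in l -> i < 7) -> pinv chosen acc ->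
  pinv chosen (foldl (fun acc i => foldl (pstep chosen (cnt5 i chosen) (cnt5 i cands) i) acc zs) acc l) /\
  (foldl (fun acc i => foldl (pstep chosen (cnt5 i chosen) (cnt5 i cands) i) acc zs) acc l = None ->
     acc = None /\ forall i v, i \in l -> 3 <= count (slot i v) chosen).
Proof.
elim=> [|i l IH] acc Hl Pa /=; first by split=> // ->.
have hi : i < 7 by apply: Hl; rewrite mem_head.
have [P1 P2] := inner_spec cands hi zs Pa.
have Hl' : forall j, j \in l -> j < 7 by move=> j hj; apply: Hl; rewrite in_cons hj orbT.
have [IH1 IH2] := IH _ Hl' P1; split=> // /IH2 [E H].
have [-> H'] := P2 E; split=> // j v; rewrite in_cons => /orP[/eqP->|]; last exact: H.
by apply: H'; case: v.
Qed.

Lemma pick2_some chosen cands i v : pick2 chosen cands = Some (i, v) ->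
  i < 7 /\ count (slot i v) chosen < 3.
Proof.
rewrite /pick2 /pick.
have Hio : forall i, i \in iota 0 7 -> i < 7 by move=> j; rewrite mem_iota.
have [P _] := @outer_spec chosen cands (iota 0 7) None Hio isT.
move: P; case: (foldl _ _ _) => [[[j w] c]|] //= /andP[h1 h2] [<- <-]; by [].
Qed.

Lemma pick2_none chosen cands : pick2 chosen cands = None ->
  forall i v, i < 7 -> 3 <= count (slot i v) chosen.
Proof.
rewrite /pick2 /pick.
have Hio : forall i, i \in iota 0 7 -> i < 7 by move=> j; rewrite mem_iota.
have [_ P] := @outer_spec chosen cands (iota 0 7) None Hio isT.
move: P; case: (foldl _ _ _) => [[[j w] c]|] // P _ i v hi.
by have [_ H] := P erefl; apply: H; rewrite mem_iota.
Qed.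

Lemma sum5 l : count (slot 0 Z0) l + count (slot 0 Z1) l + count (slot 0 Z2) l
   + count (slot 0 Z3) l + count (slot 0 Z4) l = size l.
Proof.
elim: l => [|x l IH] //=; rewrite /slot; case: (coord 0 x) => /=; rewrite -IH /=;
  rewrite ?add0n ?add1n ?addSn ?addnS //.
Qed.



Lemma leaf_perm (T : seq w7) (UT : uniq T) (ST : size T = 15) chosen : uniq chosen -> {subset chosen <= T} -> 15 <= size chosen -> perm_eq chosen T.
Proof.
move=> Uc Sc hs; apply: uniq_perm => //.
by case: (uniq_min_size Uc Sc); rewrite ?ST.
Qed.

Lemma br_complete (T : seq w7) (CT : forall x y, x \in T -> y \in T -> x != y -> compat x y) (rec : seq w7 -> seq w7 -> seq (seq w7)) chosen O :
  (forall (chosen' cands' : seq w7), uniq chosen' -> {subset chosen' <= T} ->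
     (forall y, y \in T -> y \notin chosen' -> y \in cands') -> size chosen' = (size chosen).+1 ->
     has (fun L => perm_eq L T) (rec chosen' cands')) ->
  uniq chosen -> {subset chosen <= T} ->
  forall S, (exists y, [&& y \in S, y \in T & y \notin chosen]) ->
  (forall y, y \in T -> y \notin chosen -> y \in O ++ S) ->
  has (fun L => perm_eq L T) (br rec chosen O S).
Proof.
move=> Hrec Uc Sc; elim=> [|x S IH] [y /and3P[yS yT yc]] Hcov //=.
rewrite has_cat; case xT: (x \in T); case xc: (x \in chosen).
- apply/orP; right; apply: IH.
    exists y; rewrite yT yc !andbT; move: yS; rewrite in_cons => /orP[/eqP E|//].
    by move: yc; rewrite E xc.
  move=> z zT zc; rewrite mem_cat; move: (Hcov z zT zc); rewrite mem_cat in_cons => /or3P[->|/eqP E|->]; rewrite ?orbT //.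
  by move: zc; rewrite E xc.
- apply/orP; left; apply: Hrec => //=.
  + by rewrite xc.
  + by move=> z; rewrite in_cons => /orP[/eqP->|/Sc].
  + move=> z zT; rewrite in_cons negb_or => /andP[zx zc].
    rewrite mem_filter; apply/andP; split.
      by apply: CT => //; rewrite eq_sym.
    by move: (Hcov z zT zc); rewrite !mem_cat in_cons (negbTE zx).
- apply/orP; right; apply: IH.
    exists y; rewrite yT yc !andbT; move: yS; rewrite in_cons => /orP[/eqP E|//].
    by move: yT; rewrite E xT.
  move=> z zT zc; rewrite mem_cat; move: (Hcov z zT zc); rewrite mem_cat in_cons => /or3P[->|/eqP E|->]; rewrite ?orbT //.
  by move: zT; rewrite E xT.
- apply/orP; right; apply: IH.
    exists y; rewrite yT yc !andbT; move: yS; rewrite in_cons => /orP[/eqP E|//].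
    by move: yT; rewrite E xT.
  move=> z zT zc; rewrite mem_cat; move: (Hcov z zT zc); rewrite mem_cat in_cons => /or3P[->|/eqP E|->]; rewrite ?orbT //.
  by move: zT; rewrite E xT.
Qed.

Lemma search_complete (T : seq w7) (UT : uniq T) (ST : size T = 15)
 (CT : forall x y, x \in T -> y \in T -> x != y -> compat x y)
 (BT : forall i v, i < 7 -> count (slot i v) T = 3) : forall f chosen cands, uniq chosen -> {subset chosen <= T} ->
  (forall y, y \in T -> y \notin chosen -> y \in cands) -> 15 <= size chosen + f ->
  has (fun L => perm_eq L T) (search f chosen cands).
Proof.
have Hle : forall chosen, uniq chosen -> {subset chosen <= T} -> size chosen <= 15.
  by move=> c Uc Sc; rewrite -ST; apply: uniq_leq_size.
elim=> [|f IH] chosen cands Uc Sc Cc Hs.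
  rewrite addn0 in Hs; rewrite /= eqn_leq Hle //= Hs /= (leaf_perm UT ST) //.
rewrite /=; case: ifP => [/eqP hs|hs]; first by rewrite /= (leaf_perm UT ST) // hs.
have hlt : size chosen < 15 by rewrite ltn_neqAle hs Hle.
case E: (pick2 chosen cands) => [[i v]|]; last first.
  have H := pick2_none E; move: (sum5 chosen).
  have := H 0 Z0 isT; have := H 0 Z1 isT; have := H 0 Z2 isT; have := H 0 Z3 isT; have := H 0 Z4 isT.
  move: hlt; clear; set a := count _ _; set b := count _ _; set c := count _ _; set d := count _ _; set e := count _ _.
  move=> hlt h4 h3 h2 h1 h0 hsum; move: hlt; rewrite -hsum.
  by rewrite ltnNge (leq_add (leq_add (leq_add (leq_add h0 h1) h2) h3) h4).
have [hi hc] := pick2_some E.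
apply: (br_complete CT) => //.
- move=> c' k' Uc' Sc' Cc' hs'; apply: IH => //; by rewrite hs' addSnnS.
- have : has (fun y => slot i v y && (y \notin chosen)) T.
    apply/negPn/negP => /hasPn H.
    have : count (slot i v) T <= count (slot i v) chosen.
      rewrite -!size_filter; apply: uniq_leq_size; first exact: filter_uniq.
      move=> z; rewrite !mem_filter => /andP[sz zT]; rewrite sz /=.
      by move: (H z zT); rewrite sz /= negbK.
    by rewrite BT // leqNgt hc.
  case/hasP => y yT /andP[sy yc]; by exists y; rewrite mem_filter sy (Cc y yT yc) yT yc.
- move=> y yT yc; rewrite mem_cat !mem_filter /= (Cc y yT yc) !andbT.
  by case: (slot i v y).
Qed.



Lemma all_in_allw w : w \in allw.
Proof.
have Hz : forall z, z \in zs by case.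
case: w => a b c d e f g; rewrite /allw.
apply/flatten_mapP; exists a => //; apply/flatten_mapP; exists b => //.
apply/flatten_mapP; exists c => //; apply/flatten_mapP; exists d => //.
apply/flatten_mapP; exists e => //; apply/flatten_mapP; exists f => //.
by apply/mapP; exists g.
Qed.

Lemma all2_exP (X : eqType) (Y : Type) (P : X -> Y -> bool) l1 l2 a :
  all2 P l1 l2 -> a \in l1 -> exists b, P a b.
Proof.
elim: l1 l2 => [|x l1 IH] [|y l2] //= /andP[Pxy H]; rewrite in_cons => /orP[/eqP->|al].
  by exists y.
exact: IH H al.
Qed.

Lemma z5_eq (a : 'Z_5) v : (z5_of a == v) = (a == z_of v).
Proof. by apply/eqP/eqP => [<-|->]; rewrite ?z5K ?z5_ofK. Qed.

Lemma count_enum (D : {set word 5 7}) (P : pred (word 5 7)) :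
  count P (enum D) = #|[set u in D | P u]|.
Proof.
rewrite cardE /enum_mem -size_filter -filter_predI.
by congr size; apply: eq_filter => u; rewrite !inE /= andbC.
Qed.

Lemma run_complete (D : {set word 5 7}) r :
  #|D| = 15 -> min_lee_ge D 9 -> r \in map enc (enum D) -> zw \in map enc (enum D) -> r != zw ->
  has (fun L => perm_eq L (map enc (enum D))) (run r).
Proof.
move=> HD HM rT zT rz.
have [D2 B2] := tight HD HM.
set T := map enc (enum D).
have UT : uniq T by rewrite (map_inj_uniq enc_inj) enum_uniq.
have ST : size T = 15 by rewrite size_map -cardE.
have CT : forall x y, x \in T -> y \in T -> x != y -> compat x y.
  move=> a b /mapP[u uD ->] /mapP[v vD ->] ne; rewrite /compat -lee_distE D2 //.
  - by rewrite -mem_enum.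
  - by rewrite -mem_enum.
  - by apply: contra ne => /eqP->.
have BT : forall i v, i < 7 -> count (slot i v) T = 3.
  move=> i v hi; rewrite count_map.
  have -> : count (preim enc (slot i v)) (enum D) = count (fun u : word 5 7 => u (inord i) == z_of v) (enum D).
    by apply: eq_count => u /=; rewrite /slot coord_enc // z5_eq.
  by rewrite count_enum; apply: B2.
have := @search_complete T UT ST CT BT 13 [:: r; zw] (filter (compat r) W9).
rewrite /run; apply.
- by rewrite /uniq inE rz andbT; exact: isT.
- by move=> z; rewrite !inE => /orP[/eqP->|/eqP->].
- move=> z zT'; rewrite !inE negb_or => /andP[zr zz].
  rewrite mem_filter CT 1?eq_sym //= mem_filter all_in_allw andbT.
  by have := CT z zw zT' zT zz.
- by [].
Qed.

Lemma leaf_equiv (D : {set word 5 7}) L g :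
  #|D| = 15 -> perm_eq L (map enc (enum D)) -> checkL L g -> lee_equiv D C0.
Proof.
move=> HD pL /andP[vg /allP H].
have [s [c [sg Hs]]] := cert_sem vg.
exists s, c, sg; apply/eqP; rewrite eqEcard -/(img s c sg D) card_img card_C0 HD leqnn andbT.
apply/subsetP => w /imsetP[u uD ->]; rewrite C0_enc Hs; apply: H.
by rewrite (perm_mem pL); apply: map_f; rewrite mem_enum.
Qed.

Lemma equiv_main (C : {set word 5 7}) : #|C| = 15 -> min_lee_ge C 9 -> lee_equiv C C0.
Proof.
move=> HC HM.
have [x xC] : exists x, x \in C by apply/card_gt0P; rewrite HC.
apply: (@equiv_trans (fun _ => false) (fun i => - x i)%R 1%g).
set C1 := img _ _ _ C.
have HC1 : #|C1| = 15 by rewrite card_img.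
have HM1 : min_lee_ge C1 9 by apply: min_img.
have z1 : [ffun => 0%R] \in C1.
  apply/imsetP; exists x => //; apply/ffunP => i; rewrite !ffunE perm1 /dih /= GRing.addrN.
  by [].
have [D1 B1] := tight HC1 HM1.
have [y yC1 /andP[y0 yn0]] : exists2 y, y \in C1 & (y ord0 == 0%R) && (y != [ffun => 0%R]).
  have := B1 ord0 0%R; rewrite /ncnt (cardsD1 [ffun => 0%R]) inE z1 ffunE eqxx /= add1n => [[]].
  move=> h; have /card_gt0P[y] : 0 < #|[set x0 in C1 | x0 ord0 == 0%R] :\ [ffun=> 0%R]| by rewrite h.
  rewrite !inE => /andP[yn /andP[yC y0]].
  by exists y => //; rewrite y0.
have dy : lee_dist y [ffun => 0%R] = 9 by apply: D1.
have yW : enc y \in W9.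
  by rewrite mem_filter all_in_allw andbT -enc0 -lee_distE dy.
have yc0 : coord 0 (enc y) = Z0.
  rewrite coord_enc //; have -> : (inord 0 : 'I_7) = ord0 by apply/val_inj; rewrite /= inordK.
  by rewrite (eqP y0).
have := allP normcT _ yW; rewrite yc0 /= => /and3P[vg rg zg].
have [s [c [sg Hs]]] := cert_sem vg.
apply: (@equiv_trans s c sg).
set D := img s c sg C1.
have HD : #|D| = 15 by rewrite card_img.
have HMD : min_lee_ge D 9 by apply: min_img.
have rT : actw (normc (enc y)) (enc y) \in map enc (enum D).
  apply/mapP; exists (lee_act s c sg y); first by rewrite mem_enum; apply: imset_f.
  by rewrite Hs.
move: (actw (normc (enc y)) (enc y)) rg rT => r rg rT.
have zT : zw \in map enc (enum D).
  apply/mapP; exists (lee_act s c sg [ffun => 0%R]); first by rewrite mem_enum; apply: imset_f.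
  by rewrite Hs enc0 (eqP zg).
have rz : r != zw.
  by move: rg; rewrite !inE; case/orP => /eqP E; rewrite E.
have Hrun := run_complete HD HMD rT zT rz.
have Hac := allchecksT; rewrite /allchecks in Hac; case/andP: Hac => HA1 HA2.
move: rg; rewrite !inE => /orP[]/eqP Er; rewrite Er in Hrun.
- case/hasP: Hrun => L LR pL.
  have [g Hg] := all2_exP HA1 LR; exact: leaf_equiv HD pL Hg.
- case/hasP: Hrun => L LR pL.
  have [g Hg] := all2_exP HA2 LR; exact: leaf_equiv HD pL Hg.
Qed.

Lemma ALee_val : ALee 5 7 9 = 15.
Proof.
apply/eqP; rewrite eqn_leq; apply/andP; split.
  by apply/bigmax_leqP => C HC; exact: plotkin.
rewrite -{1}card_C0 /ALee.
exact: (@leq_bigmax_cond _ (fun C : {set word 5 7} => min_lee_ge C 9) (fun C : {set word 5 7} => #|C|) C0 min_C0).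
Qed.



Theorem mainTheorem14 :
  #|C0| = 15%N /\ min_lee_ge C0 9 /\ ALee 5 7 9 = 15%N /\
  (forall C : {set word 5 7}, #|C| = 15%N -> min_lee_ge C 9 -> lee_equiv C C0).
Proof.
split; first exact: card_C0.
split; first exact: min_C0.
split; first exact: ALee_val.
exact: equiv_main.
Qed.
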